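(* Let $A=(a_{nk})$ be an infinite complex matrix and $1<p<\infty$. (i) $A\in(c_0^\lambda(\widehat B):\ell_p)$ if and only if: (a) $\sup_{F\in\mathcal F}\sum_n\left|\sum_{k\in F}\widehat g_{nk}\right|^p<\infty$; (b) $\sum_{j=k}^\infty d_{jk}a_{nj}$ converges for all fixed $k,n\in\mathbb{N}$; (c) $\sup_{m\in\mathbb{N}}\sum_{k=0}^{m-1}|\widehat g_{nk}(m)|<\infty$ for each $n$; (d) $\sup_k\left|\frac1r\frac{\lambda_k}{\lambda_k-\lambda_{k-1}}a_{nk}\right|<\infty$ for each $n\in\mathbb{N}$. (ii) $A\in(c_0^\lambda(\widehat B):\ell_\infty)$ if and only if condition (c), condition (d), and $\sup_{n\in\mathbb{N}}\sum_k|\widehat g_{nk}|<\infty$ hold.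
   Context: Fix nonzero reals $r,s,t$ and a strictly increasing sequence $\lambda=(\lambda_k)_{k\ge0}$ of positive reals with $\lambda_k\to\infty$. Convention: terms with negative subscript are $0$. $\omega$: all complex sequences indexed by $\mathbb{N}=\{0,1,\dots\}$; $\mathcal F$: finite subsets of $\mathbb{N}$. $D=(d_{nk})$ is the inverse of the lower triangular matrix $B(r,s,t)$ having $r$ on the diagonal, $s$ on the first subdiagonal, $t$ on the second subdiagonal and zeros elsewhere; explicitly $d_{nk}=\frac1r\sum_{v=0}^{n-k}\rho_1^{\,n-k-v}\rho_2^{\,v}$ ($0\le k\le n$), $d_{nk}=0$ ($k>n$), $\rho_{1,2}=\frac{-s\pm\sqrt{s^2-4tr}}{2r}$. With $\widehat W_n(x)=\frac{1}{\lambda_n}\sum_{k=0}^n(\lambda_k-\lambda_{k-1})(rx_k+sx_{k-1}+tx_{k-2})$, $c_0^\lambda(\widehat B)=\{x\in\omega:(\widehat W_n(x))_n\in c_0\}$. For $k<m$, $\widehat g_{nk}(m)=\lambda_k\left(\frac{1}{\lambda_k-\lambda_{k-1}}\sum_{j=k}^m d_{jk}a_{nj}-\frac{1}{\lambda_{k+1}-\lambda_k}\sum_{j=k+1}^m d_{j,k+1}a_{nj}\right)$, and $\widehat g_{nk}$ is the same with sums to $\infty$ (provided convergence). $A\in(X:Y)$ means that for every $x\in X$ the series $(Ax)_n=\sum_k a_{nk}x_k$ converges for each $n$ and $Ax\in Y$. *)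

(* Defs.v *)
From Stdlib Require Import Reals Lra List.
From Coquelicot Require Import Coquelicot.
Open Scope R_scope.

Fixpoint rsum (f : nat -> R) (m : nat) : R :=
  match m with O => 0 | S m' => rsum f m' + f m' end.
Fixpoint csum (f : nat -> C) (m : nat) : C :=
  match m with O => RtoC 0 | S m' => Cplus (csum f m') (f m') end.

(* Sum over a finite set F of naturals, represented by a duplicate-free list. *)
Definition csum_list (f : nat -> C) (F : list nat) : C :=
  fold_right (fun k acc => Cplus (f k) acc) (RtoC 0) F.

Definition CSeries (a : nat -> C) : C :=
  (Series (fun j => fst (a j)), Series (fun j => snd (a j))).

Definition powp (x p : R) : R := if Rle_dec x 0 then 0 else Rpower x p.

(* Convention: terms with negative subscript are 0. *)
Definition lam_m1 (lam : nat -> R) (k : nat) : R :=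
  match k with O => 0 | S k' => lam k' end.
Definition xsh (x : nat -> C) (i k : nat) : C :=
  if Nat.leb i k then x (k - i)%nat else RtoC 0.

(* D = (d_{nk}) = inverse of the lower triangular band matrix B(r,s,t).
   d_{nk} depends only on n-k: with e(0)=1/r, e(1)=-s/r^2 and
   r e(m+2) + s e(m+1) + t e(m) = 0 (forward substitution for B D = I). *)
Fixpoint dseq_aux (r s t : R) (m : nat) : R * R :=
  match m with
  | O => (/ r, - s / (r * r))
  | S m' => let '(u, v) := dseq_aux r s t m' in (v, - (s * v + t * u) / r)
  end.
Definition dseq (r s t : R) (m : nat) : R := fst (dseq_aux r s t m).
Definition dmat (r s t : R) (n k : nat) : R :=
  if Nat.leb k n then dseq r s t (n - k)%nat else 0.

Definition What (r s t : R) (lam : nat -> R) (x : nat -> C) (n : nat) : C :=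
  Cmult (RtoC (/ lam n))
    (csum (fun k => Cmult (RtoC (lam k - lam_m1 lam k))
          (Cplus (Cplus (Cmult (RtoC r) (x k)) (Cmult (RtoC s) (xsh x 1 k)))
                 (Cmult (RtoC t) (xsh x 2 k)))) (S n)).

Definition c0_lam_B (r s t : R) (lam : nat -> R) (x : nat -> C) : Prop :=
  is_lim_seq (fun n => Cmod (What r s t lam x n)) 0.

Definition Arow (a : nat -> nat -> C) (x : nat -> C) (n : nat) : nat -> C :=
  fun k => Cmult (a n k) (x k).
Definition Ax (a : nat -> nat -> C) (x : nat -> C) (n : nat) : C :=
  CSeries (Arow a x n).

Definition in_lp (p : R) (y : nat -> C) : Prop :=
  ex_series (fun n => powp (Cmod (y n)) p).
Definition in_linf (y : nat -> C) : Prop :=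
  exists M, forall n, Cmod (y n) <= M.

Definition maps_c0lamB_to (r s t : R) (lam : nat -> R) (a : nat -> nat -> C)
  (Y : (nat -> C) -> Prop) : Prop :=
  forall x, c0_lam_B r s t lam x ->
    (forall n, ex_series (Arow a x n)) /\ Y (Ax a x).

Definition dasum (r s t : R) (a : nat -> nat -> C) (n k m : nat) : C :=
  csum (fun i => Cmult (RtoC (dmat r s t (k + i) k)) (a n (k + i)%nat)) (S (m - k)).
Definition daterm (r s t : R) (a : nat -> nat -> C) (n k : nat) : nat -> C :=
  fun i => Cmult (RtoC (dmat r s t (k + i) k)) (a n (k + i)%nat).

Definition ghat_m (r s t : R) (lam : nat -> R) (a : nat -> nat -> C) (n k m : nat) : C :=
  Cmult (RtoC (lam k))
   (Cminus (Cmult (RtoC (/ (lam k - lam_m1 lam k))) (dasum r s t a n k m))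
           (Cmult (RtoC (/ (lam (S k) - lam k))) (dasum r s t a n (S k) m))).

(* \widehat g_{nk} (meaningful when the series converge, cf. cond_b) *)
Definition ghat (r s t : R) (lam : nat -> R) (a : nat -> nat -> C) (n k : nat) : C :=
  Cmult (RtoC (lam k))
   (Cminus (Cmult (RtoC (/ (lam k - lam_m1 lam k))) (CSeries (daterm r s t a n k)))
           (Cmult (RtoC (/ (lam (S k) - lam k))) (CSeries (daterm r s t a n (S k))))).

Definition cond_a (r s t : R) (lam : nat -> R) (a : nat -> nat -> C) (p : R) : Prop :=
  exists M, forall (F : list nat), NoDup F -> forall N,
    rsum (fun n => powp (Cmod (csum_list (ghat r s t lam a n) F)) p) N <= M.
Definition cond_b (r s t : R) (a : nat -> nat -> C) : Prop :=
  forall k n, ex_series (daterm r s t a n k).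
Definition cond_c (r s t : R) (lam : nat -> R) (a : nat -> nat -> C) : Prop :=
  forall n, exists M, forall m, rsum (fun k => Cmod (ghat_m r s t lam a n k m)) m <= M.
Definition cond_d (r : R) (lam : nat -> R) (a : nat -> nat -> C) : Prop :=
  forall n, exists M, forall k,
    Cmod (Cmult (RtoC (/ r * (lam k / (lam k - lam_m1 lam k)))) (a n k)) <= M.
Definition cond_e (r s t : R) (lam : nat -> R) (a : nat -> nat -> C) : Prop :=
  exists M, forall n N, rsum (fun k => Cmod (ghat r s t lam a n k)) N <= M.

Definition lam_ok (lam : nat -> R) : Prop :=
  (forall k, 0 < lam k) /\ (forall k, lam k < lam (S k)) /\ is_lim_seq lam p_infty.

(* Main.v *)
Require Import Defs.
From Stdlib Require Import Reals Lra Lia List Classical ClassicalEpsilon FunctionalExtensionality.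
From Coquelicot Require Import Coquelicot.
Open Scope R_scope.


Definition RL (u : nat -> R) (l : R) : Prop :=
  forall eps, 0 < eps -> exists N, forall n, (N <= n)%nat -> Rabs (u n - l) < eps.
Definition Clim (u : nat -> C) (l : C) : Prop :=
  forall eps, 0 < eps -> exists N, forall n, (N <= n)%nat -> Cmod (Cminus (u n) l) < eps.

Lemma RL_is_lim u l : RL u l <-> is_lim_seq u l.
Proof.
  rewrite <- is_lim_seq_spec. split.
  - intros H eps. destruct (H eps (cond_pos eps)) as [N HN]. exists N. intros n Hn. apply HN. lia.
  - intros H eps Heps. destruct (H (mkposreal eps Heps)) as [N HN]. exists N. intros n Hn. apply (HN n). lia.
Qed.

Lemma sum_n_rsum (f : nat -> R) n : sum_n f n = rsum f (S n).
Proof.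
  induction n.
  - rewrite sum_O. simpl. ring.
  - rewrite sum_Sn, IHn. simpl. reflexivity.
Qed.

Lemma sum_n_csum (f : nat -> C) n : sum_n f n = csum f (S n).
Proof.
  induction n.
  - rewrite sum_O. simpl. apply injective_projections; simpl; ring.
  - rewrite sum_Sn, IHn. simpl. reflexivity.
Qed.

Lemma ser_R f l : is_series f l <-> RL (rsum f) l.
Proof.
  unfold is_series. split.
  - intros H0. pose proof (proj1 (filterlim_locally (F:=eventually) (sum_n f) l) H0) as H. clear H0.
    intros eps Heps. destruct (H (mkposreal eps Heps)) as [N HN]. exists (S N).
    intros n Hn. destruct n as [|n]; [lia|]. rewrite <- sum_n_rsum. apply (HN n). lia.
  - intros H. apply (filterlim_locally (F:=eventually) (sum_n f) l).
    intros eps. destruct (H eps (cond_pos eps)) as [N HN]. exists N. intros n Hn.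
    change (Rabs (sum_n f n - l) < eps). rewrite sum_n_rsum. apply HN. lia.
Qed.

Lemma Cmod_le_re_im (c : C) : Cmod c <= Rabs (fst c) + Rabs (snd c).
Proof.
  destruct c as [x y]. simpl.
  replace (x, y) with (Cplus (RtoC x) (Cmult (RtoC y) Ci)).
  2:{ apply injective_projections; simpl; ring. }
  eapply Rle_trans. apply Cmod_triangle. rewrite Cmod_mult, Cmod_Ci, !Cmod_R. lra.
Qed.

Lemma re_le_Cmod' (c : C) : Rabs (fst c) <= Cmod c.
Proof. apply re_le_Cmod. Qed.
Lemma im_le_Cmod' (c : C) : Rabs (snd c) <= Cmod c.
Proof.
  destruct c as [x y]. unfold Cmod. simpl. rewrite <- sqrt_Rsqr_abs.
  apply sqrt_le_1_alt. unfold Rsqr. nra.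
Qed.

Lemma rsum_fst (a : nat -> C) m : fst (csum a m) = rsum (fun k => fst (a k)) m.
Proof. induction m; simpl; [reflexivity| rewrite IHm; reflexivity]. Qed.
Lemma rsum_snd (a : nat -> C) m : snd (csum a m) = rsum (fun k => snd (a k)) m.
Proof. induction m; simpl; [reflexivity| rewrite IHm; reflexivity]. Qed.

Lemma Clim_comp (u : nat -> C) l :
  Clim u l <-> RL (fun n => fst (u n)) (fst l) /\ RL (fun n => snd (u n)) (snd l).
Proof.
  split.
  - intros H. split; intros eps Heps; destruct (H eps Heps) as [N HN]; exists N; intros n Hn;
    specialize (HN n Hn).
    + eapply Rle_lt_trans; [|exact HN]. pose proof (re_le_Cmod' (Cminus (u n) l)). simpl in H0. exact H0.
    + eapply Rle_lt_trans; [|exact HN]. pose proof (im_le_Cmod' (Cminus (u n) l)). simpl in H0. exact H0.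
  - intros [H1 H2] eps Heps.
    destruct (H1 (eps/2)) as [N1 HN1]. lra. destruct (H2 (eps/2)) as [N2 HN2]. lra.
    exists (N1 + N2)%nat. intros n Hn. eapply Rle_lt_trans. apply Cmod_le_re_im.
    simpl. specialize (HN1 n ltac:(lia)). specialize (HN2 n ltac:(lia)). unfold Rminus in *. lra.
Qed.

Lemma ser_C (a : nat -> C) l : is_series a l <-> Clim (csum a) l.
Proof.
  rewrite Clim_comp. unfold is_series. split.
  - intros H0. pose proof (proj1 (filterlim_locally (F:=eventually) (sum_n a) l) H0) as H. clear H0. split; intros eps Heps; destruct (H (mkposreal eps Heps)) as [N HN]; exists (S N);
    intros n Hn; destruct n as [|n]; try lia; destruct (HN n ltac:(lia)) as [B1 B2];
    rewrite sum_n_csum in B1, B2; [exact B1| exact B2].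
  - intros [H1 H2]. apply (filterlim_locally (F:=eventually) (sum_n a) l). intros eps. destruct (H1 eps (cond_pos eps)) as [N1 HN1].
    destruct (H2 eps (cond_pos eps)) as [N2 HN2]. exists (N1 + N2)%nat. intros n Hn.
    rewrite sum_n_csum. split; [apply HN1 | apply HN2]; lia.
Qed.

Lemma RL_ext (u v : nat -> R) l : (forall n, u n = v n) -> RL u l -> RL v l.
Proof. intros E H eps He. destruct (H eps He) as [N HN]. exists N. intros. rewrite <- E. auto. Qed.

Lemma CSeries_Clim (a : nat -> C) l : Clim (csum a) l -> CSeries a = l.
Proof.
  intros H. apply Clim_comp in H. destruct H as [H1 H2]. unfold CSeries.
  destruct l as [l1 l2]. simpl in *. f_equal.
  - apply is_series_unique. apply ser_R. eapply RL_ext; [|exact H1]. intros; apply rsum_fst.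
  - apply is_series_unique. apply ser_R. eapply RL_ext; [|exact H2]. intros; apply rsum_snd.
Qed.

Lemma ex_series_C (a : nat -> C) : ex_series a <-> exists l, Clim (csum a) l.
Proof.
  split.
  - intros [l Hl]. exists l. apply ser_C. exact Hl.
  - intros [l Hl]. exists l. apply ser_C. exact Hl.
Qed.

Lemma ex_series_Clim (a : nat -> C) : ex_series a -> Clim (csum a) (CSeries a).
Proof.
  intros H. apply ex_series_C in H. destruct H as [l Hl].
  rewrite (CSeries_Clim a l Hl). exact Hl.
Qed.


Lemma Cmod_sub_sym (x y : C) : Cmod (Cminus x y) = Cmod (Cminus y x).
Proof. replace (Cminus x y) with (Copp (Cminus y x)) by ring. apply Cmod_opp. Qed.

Lemma Cmod_triangle_sub (x y z : C) : Cmod (Cminus x z) <= Cmod (Cminus x y) + Cmod (Cminus y z).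
Proof. replace (Cminus x z) with (Cplus (Cminus x y) (Cminus y z)) by ring. apply Cmod_triangle. Qed.

Lemma Cminus_0_r (x : C) : Cminus x (RtoC 0) = x.
Proof. ring. Qed.

Lemma Clim_const c : Clim (fun _ => c) c.
Proof. intros e He. exists O. intros. replace (Cminus c c) with (RtoC 0) by ring. rewrite Cmod_0. lra. Qed.

Lemma Clim_plus u v lu lv : Clim u lu -> Clim v lv -> Clim (fun n => Cplus (u n) (v n)) (Cplus lu lv).
Proof.
  intros Hu Hv e He. destruct (Hu (e/2)) as [N1 H1]. lra. destruct (Hv (e/2)) as [N2 H2]. lra.
  exists (N1+N2)%nat. intros n Hn.
  replace (Cminus (Cplus (u n) (v n)) (Cplus lu lv)) with (Cplus (Cminus (u n) lu) (Cminus (v n) lv)) by ring.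
  eapply Rle_lt_trans. apply Cmod_triangle. specialize (H1 n ltac:(lia)). specialize (H2 n ltac:(lia)). lra.
Qed.

Lemma Clim_scal c u l : Clim u l -> Clim (fun n => Cmult c (u n)) (Cmult c l).
Proof.
  intros Hu e He. destruct (Hu (e / (Cmod c + 1))) as [N HN].
  { apply Rdiv_lt_0_compat. lra. pose proof (Cmod_ge_0 c). lra. }
  exists N. intros n Hn. replace (Cminus (Cmult c (u n)) (Cmult c l)) with (Cmult c (Cminus (u n) l)) by ring.
  rewrite Cmod_mult. specialize (HN n Hn). pose proof (Cmod_ge_0 c). pose proof (Cmod_ge_0 (Cminus (u n) l)).
  apply Rle_lt_trans with ((Cmod c + 1) * Cmod (Cminus (u n) l)). nra.
  apply Rmult_lt_compat_l with (r := Cmod c + 1) in HN. 2: lra.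
  replace ((Cmod c + 1) * (e / (Cmod c + 1))) with e in HN by (field; apply Rgt_not_eq; lra). exact HN.
Qed.

Lemma Clim_opp u l : Clim u l -> Clim (fun n => Copp (u n)) (Copp l).
Proof.
  intros H. replace (Copp l) with (Cmult (RtoC (-1)) l) by (apply injective_projections; simpl; ring).
  eapply (fun H' => proj1 (conj H' I)). intros e He. destruct (Clim_scal (RtoC (-1)) u l H e He) as [N HN].
  exists N. intros n Hn. replace (Copp (u n)) with (Cmult (RtoC (-1)) (u n)) by (apply injective_projections; simpl; ring). auto.
Qed.

Lemma Clim_minus u v lu lv : Clim u lu -> Clim v lv -> Clim (fun n => Cminus (u n) (v n)) (Cminus lu lv).
Proof. intros. apply (Clim_plus u (fun n => Copp (v n))); auto. apply Clim_opp; auto. Qed.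

Lemma Clim_unique u l1 l2 : Clim u l1 -> Clim u l2 -> l1 = l2.
Proof.
  intros H1 H2. destruct (Req_dec (Cmod (Cminus l1 l2)) 0) as [E|E].
  - apply Ceq_minus. apply Cmod_eq_0. exact E.
  - exfalso. pose proof (Cmod_ge_0 (Cminus l1 l2)). set (d := Cmod (Cminus l1 l2)) in *.
    destruct (H1 (d/2)) as [N1 HN1]. lra. destruct (H2 (d/2)) as [N2 HN2]. lra.
    specialize (HN1 (N1+N2)%nat ltac:(lia)). specialize (HN2 (N1+N2)%nat ltac:(lia)).
    pose proof (Cmod_triangle_sub l1 (u (N1+N2)%nat) l2). rewrite (Cmod_sub_sym l1 (u (N1+N2)%nat)) in H0. fold d in H0. lra.
Qed.

Lemma Clim_ext_ev u v l : (exists N, forall n, (N <= n)%nat -> u n = v n) -> Clim u l -> Clim v l.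
Proof.
  intros [M HM] H e He. destruct (H e He) as [N HN]. exists (M+N)%nat. intros n Hn.
  rewrite <- HM by lia. apply HN. lia.
Qed.

Lemma Clim_ext u v l : (forall n, u n = v n) -> Clim u l -> Clim v l.
Proof. intros E. apply Clim_ext_ev. exists O. auto. Qed.

Lemma Clim_comp_idx u l (f : nat -> nat) :
  (forall N, exists M, forall m, (M <= m)%nat -> (N <= f m)%nat) -> Clim u l -> Clim (fun m => u (f m)) l.
Proof.
  intros Hf H e He. destruct (H e He) as [N HN]. destruct (Hf N) as [M HM]. exists M. intros. apply HN. auto.
Qed.

Lemma RL_le_bound u l C : RL u l -> (exists N, forall n, (N <= n)%nat -> u n <= C) -> l <= C.
Proof.
  intros H [N HN]. destruct (Rle_dec l C) as [|Hn]; auto. exfalso.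
  destruct (H (l - C)) as [M HM]. lra. specialize (HM (N+M)%nat ltac:(lia)). specialize (HN (N+M)%nat ltac:(lia)).
  apply Rabs_def2 in HM. lra.
Qed.

Lemma RL_ge_bound u l C : RL u l -> (exists N, forall n, (N <= n)%nat -> C <= u n) -> C <= l.
Proof.
  intros H [N HN]. destruct (Rle_dec C l) as [|Hn]; auto. exfalso.
  destruct (H (C - l)) as [M HM]. lra. specialize (HM (N+M)%nat ltac:(lia)). specialize (HN (N+M)%nat ltac:(lia)).
  apply Rabs_def2 in HM. lra.
Qed.

Lemma Clim_Cmod u l : Clim u l -> RL (fun n => Cmod (u n)) (Cmod l).
Proof.
  intros H e He. destruct (H e He) as [N HN]. exists N. intros n Hn. specialize (HN n Hn).
  apply Rabs_def1.
  - pose proof (Cmod_triangle_sub (u n) l 0). rewrite !Cminus_0_r in H0. lra.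
  - pose proof (Cmod_triangle_sub l (u n) 0). rewrite !Cminus_0_r in H0. rewrite Cmod_sub_sym in H0. lra.
Qed.

Lemma Clim_bound u l C : Clim u l -> (exists N, forall n, (N <= n)%nat -> Cmod (u n) <= C) -> Cmod l <= C.
Proof. intros H HB. eapply RL_le_bound. apply Clim_Cmod; eauto. exact HB. Qed.

Lemma Clim_bounded u l : Clim u l -> exists M, forall n, Cmod (u n) <= M.
Proof.
  intros H. destruct (H 1 Rlt_0_1) as [N HN].
  assert (forall K, exists M, forall n, (n < K)%nat -> Cmod (u n) <= M) as HK.
  { induction K. exists 0. intros; lia. destruct IHK as [M HM]. exists (Rmax M (Cmod (u K))).
    intros n Hn. destruct (Nat.eq_dec n K). subst. apply Rmax_r. eapply Rle_trans. apply HM. lia. apply Rmax_l. }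
  destruct (HK N) as [M HM]. exists (Rmax M (Cmod l + 1)). intros n. destruct (Nat.lt_ge_cases n N).
  - eapply Rle_trans. apply HM; auto. apply Rmax_l.
  - eapply Rle_trans. 2: apply Rmax_r. specialize (HN n H0). pose proof (Cmod_triangle_sub (u n) l 0).
    rewrite !Cminus_0_r in H1. lra.
Qed.

Lemma csum_ext_lt f g m : (forall k, (k < m)%nat -> f k = g k) -> csum f m = csum g m.
Proof. induction m; intros H; simpl; auto. rewrite IHm by (intros; apply H; lia). rewrite H by lia. auto. Qed.
Lemma rsum_ext_lt f g m : (forall k, (k < m)%nat -> f k = g k) -> rsum f m = rsum g m.
Proof. induction m; intros H; simpl; auto. rewrite IHm by (intros; apply H; lia). rewrite H by lia. auto. Qed.
Lemma csum_plus f g m : csum (fun k => Cplus (f k) (g k)) m = Cplus (csum f m) (csum g m).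
Proof. induction m; simpl. apply injective_projections; simpl; ring. rewrite IHm. ring. Qed.
Lemma csum_scal c f m : csum (fun k => Cmult c (f k)) m = Cmult c (csum f m).
Proof. induction m; simpl. apply injective_projections; simpl; ring. rewrite IHm. ring. Qed.
Lemma csum_opp f m : csum (fun k => Copp (f k)) m = Copp (csum f m).
Proof. induction m; simpl. apply injective_projections; simpl; ring. rewrite IHm. ring. Qed.
Lemma csum_zero m : csum (fun _ => RtoC 0) m = RtoC 0.
Proof. induction m; simpl; auto. rewrite IHm. ring. Qed.
Lemma rsum_plus f g m : rsum (fun k => f k + g k) m = rsum f m + rsum g m.
Proof. induction m; simpl. ring. rewrite IHm. ring. Qed.
Lemma rsum_scal c f m : rsum (fun k => c * f k) m = c * rsum f m.
Proof. induction m; simpl. ring. rewrite IHm. ring. Qed.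
Lemma rsum_le f g m : (forall k, (k < m)%nat -> f k <= g k) -> rsum f m <= rsum g m.
Proof. induction m; intros H; simpl. lra. pose proof (H m ltac:(lia)). pose proof (IHm ltac:(intros; apply H; lia)). lra. Qed.
Lemma rsum_nonneg f m : (forall k, (k < m)%nat -> 0 <= f k) -> 0 <= rsum f m.
Proof. intros H. replace 0 with (rsum (fun _ => 0) m). apply rsum_le; auto. induction m; simpl; auto. rewrite IHm. ring. auto. Qed.
Lemma rsum_mono f m m' : (forall k, 0 <= f k) -> (m <= m')%nat -> rsum f m <= rsum f m'.
Proof. intros H Hm. induction Hm. lra. simpl. pose proof (H m0). lra. Qed.
Lemma csum_Cmod f m : Cmod (csum f m) <= rsum (fun k => Cmod (f k)) m.
Proof. induction m; simpl. rewrite Cmod_0. lra. eapply Rle_trans. apply Cmod_triangle. lra. Qed.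
Lemma csum_RtoC f m : csum (fun k => RtoC (f k)) m = RtoC (rsum f m).
Proof. induction m; simpl; auto. rewrite IHm. rewrite RtoC_plus. auto. Qed.
Lemma csum_split f m n : csum f (m + n) = Cplus (csum f m) (csum (fun k => f (m + k)%nat) n).
Proof. induction n; simpl. rewrite Nat.add_0_r. ring. rewrite Nat.add_succ_r. simpl. rewrite IHn. ring. Qed.
Lemma rsum_split f m n : rsum f (m + n) = rsum f m + rsum (fun k => f (m + k)%nat) n.
Proof. induction n; simpl. rewrite Nat.add_0_r. ring. rewrite Nat.add_succ_r. simpl. rewrite IHn. ring. Qed.
Lemma csum_delta (g : nat -> C) a m : (a < m)%nat -> csum (fun k => if Nat.eqb k a then g k else RtoC 0) m = g a.
Proof.
  induction m; intros H. lia. simpl. destruct (Nat.eq_dec a m).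
  - subst. rewrite Nat.eqb_refl. rewrite (csum_ext_lt _ (fun _ => RtoC 0)). rewrite csum_zero. ring.
    intros k Hk. destruct (Nat.eqb_spec k m); auto. lia.
  - rewrite IHm by lia. destruct (Nat.eqb_spec m a). lia. ring.
Qed.


Definition Bx (r s t : R) (x : nat -> C) (k : nat) : C :=
  Cplus (Cplus (Cmult (RtoC r) (x k)) (Cmult (RtoC s) (xsh x 1 k))) (Cmult (RtoC t) (xsh x 2 k)).
Definition Dz (r s t : R) (z : nat -> C) (j : nat) : C :=
  csum (fun i => Cmult (RtoC (dseq r s t (j - i))) (z i)) (S j).

Lemma dseq_aux_S r s t m : dseq_aux r s t (S m) =
  (snd (dseq_aux r s t m), - (s * snd (dseq_aux r s t m) + t * fst (dseq_aux r s t m)) / r).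
Proof. simpl. destruct (dseq_aux r s t m). reflexivity. Qed.

Lemma dseq_SS r s t m : r <> 0 ->
  r * dseq r s t (S (S m)) + s * dseq r s t (S m) + t * dseq r s t m = 0.
Proof.
  intros Hr. unfold dseq. rewrite (dseq_aux_S r s t (S m)), (dseq_aux_S r s t m). cbn [fst snd]. field. auto.
Qed.

Lemma dseq_0 r s t : dseq r s t 0 = / r.
Proof. reflexivity. Qed.
Lemma dseq_1 r s t : r <> 0 -> r * dseq r s t 1 + s * dseq r s t 0 = 0.
Proof. intros. unfold dseq. simpl. field. auto. Qed.

Lemma C_of_R_eq0 (a : R) : a = 0 -> RtoC a = RtoC 0.
Proof. intros ->. reflexivity. Qed.

Lemma dC_SS r s t m : r <> 0 ->
  Cplus (Cplus (Cmult (RtoC r) (RtoC (dseq r s t (S (S m))))) (Cmult (RtoC s) (RtoC (dseq r s t (S m)))))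
        (Cmult (RtoC t) (RtoC (dseq r s t m))) = RtoC 0.
Proof. intros. rewrite <- !RtoC_mult, <- !RtoC_plus. apply C_of_R_eq0. apply dseq_SS; auto. Qed.

Lemma B_Dz r s t z j : r <> 0 -> Bx r s t (Dz r s t z) j = z j.
Proof.
  intros Hr. unfold Bx, xsh.
  destruct j as [|[|j]].
  - simpl. unfold Dz. simpl. rewrite dseq_0.
    assert (E2 : Cmult (RtoC r) (RtoC (/ r)) = RtoC 1). { rewrite <- RtoC_mult. f_equal. field. auto. }
    transitivity (Cmult (Cmult (RtoC r) (RtoC (/ r))) (z 0%nat)). ring.
    rewrite E2. ring.
  - simpl. unfold Dz. simpl.
    pose proof (dseq_1 r s t Hr) as H1. rewrite dseq_0 in *.
    assert (E : Cplus (Cmult (RtoC r) (RtoC (dseq r s t 1))) (Cmult (RtoC s) (RtoC (/ r))) = RtoC 0).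
    { rewrite <- !RtoC_mult, <- !RtoC_plus. apply C_of_R_eq0. auto. }
    assert (E2 : Cmult (RtoC r) (RtoC (/ r)) = RtoC 1). { rewrite <- RtoC_mult. f_equal. field. auto. }
    transitivity (Cplus (Cmult (Cplus (Cmult (RtoC r) (RtoC (dseq r s t 1))) (Cmult (RtoC s) (RtoC (/ r)))) (z 0%nat))
                        (Cmult (Cmult (RtoC r) (RtoC (/ r))) (z 1%nat))). ring.
    rewrite E, E2. ring.
  - simpl Nat.leb. cbv iota.
    replace (S (S j) - 1)%nat with (S j) by lia. replace (S (S j) - 2)%nat with j by lia.
    unfold Dz.
    change (csum (fun i => Cmult (RtoC (dseq r s t (S (S j) - i))) (z i)) (S (S (S j))))
      with (Cplus (Cplus (csum (fun i => Cmult (RtoC (dseq r s t (S (S j) - i))) (z i)) (S j))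
          (Cmult (RtoC (dseq r s t (S (S j) - S j))) (z (S j)))) (Cmult (RtoC (dseq r s t (S (S j) - S (S j)))) (z (S (S j))))).
    change (csum (fun i => Cmult (RtoC (dseq r s t (S j - i))) (z i)) (S (S j)))
      with (Cplus (csum (fun i => Cmult (RtoC (dseq r s t (S j - i))) (z i)) (S j))
          (Cmult (RtoC (dseq r s t (S j - S j))) (z (S j)))).
    replace (S (S j) - S j)%nat with 1%nat by lia. rewrite !Nat.sub_diag.
    set (X2 := csum (fun i => Cmult (RtoC (dseq r s t (S (S j) - i))) (z i)) (S j)).
    set (X1 := csum (fun i => Cmult (RtoC (dseq r s t (S j - i))) (z i)) (S j)).
    set (X0 := csum (fun i => Cmult (RtoC (dseq r s t (j - i))) (z i)) (S j)).
    assert (HX : Cplus (Cplus (Cmult (RtoC r) X2) (Cmult (RtoC s) X1)) (Cmult (RtoC t) X0) = RtoC 0).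
    { unfold X2, X1, X0. rewrite <- !csum_scal, <- !csum_plus.
      rewrite (csum_ext_lt _ (fun _ => RtoC 0)). apply csum_zero.
      intros k Hk. replace (S (S j) - k)%nat with (S (S (j - k))) by lia.
      replace (S j - k)%nat with (S (j - k)) by lia.
      pose proof (dC_SS r s t (j - k) Hr) as E.
      transitivity (Cmult (Cplus (Cplus (Cmult (RtoC r) (RtoC (dseq r s t (S (S (j - k))))))
          (Cmult (RtoC s) (RtoC (dseq r s t (S (j - k)))))) (Cmult (RtoC t) (RtoC (dseq r s t (j - k))))) (z k)). ring.
      rewrite E. ring. }
    pose proof (dseq_1 r s t Hr) as H1. rewrite dseq_0 in *.
    assert (E : Cplus (Cmult (RtoC r) (RtoC (dseq r s t 1))) (Cmult (RtoC s) (RtoC (/ r))) = RtoC 0).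
    { rewrite <- !RtoC_mult, <- !RtoC_plus. apply C_of_R_eq0. auto. }
    assert (E2 : Cmult (RtoC r) (RtoC (/ r)) = RtoC 1). { rewrite <- RtoC_mult. f_equal. field. auto. }
    transitivity (Cplus (Cplus (Cplus (Cmult (RtoC r) X2) (Cmult (RtoC s) X1)) (Cmult (RtoC t) X0))
      (Cplus (Cmult (Cplus (Cmult (RtoC r) (RtoC (dseq r s t 1))) (Cmult (RtoC s) (RtoC (/ r)))) (z (S j)))
             (Cmult (Cmult (RtoC r) (RtoC (/ r))) (z (S (S j)))))). ring.
    rewrite HX, E, E2. ring.
Qed.


Lemma B_inj r s t x x' : r <> 0 -> (forall k, Bx r s t x k = Bx r s t x' k) -> forall k, x k = x' k.
Proof.
  intros Hr H.
  assert (forall n k, (k <= n)%nat -> x k = x' k) as G.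
  { induction n; intros k Hk.
    - assert (k = 0%nat) by lia. subst. specialize (H 0%nat). unfold Bx, xsh in H. simpl in H.
      assert (Cmult (RtoC r) (x 0%nat) = Cmult (RtoC r) (x' 0%nat)) as E.
      { transitivity (Cplus (Cplus (Cmult (RtoC r) (x 0%nat)) (Cmult (RtoC s) (RtoC 0))) (Cmult (RtoC t) (RtoC 0))). ring.
        rewrite H. ring. }
      apply (f_equal (Cmult (Cinv (RtoC r)))) in E. rewrite !Cmult_assoc, Cinv_l in E. rewrite !Cmult_1_l in E. auto.
      intros E'. apply Hr. injection E'. auto.
    - destruct (Nat.eq_dec k (S n)); [|apply IHn; lia]. subst k.
      specialize (H (S n)). unfold Bx, xsh in H.
      assert (xsh x 1 (S n) = xsh x' 1 (S n)) as E1.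
      { unfold xsh. destruct (Nat.leb 1 (S n)); auto. apply IHn. lia. }
      assert (xsh x 2 (S n) = xsh x' 2 (S n)) as E2.
      { unfold xsh. destruct (Nat.leb 2 (S n)) eqn:Q; auto. apply IHn. lia. }
      unfold xsh in E1, E2. rewrite E1, E2 in H.
      assert (Cmult (RtoC r) (x (S n)) = Cmult (RtoC r) (x' (S n))) as E.
      { apply (f_equal (fun w => Cminus w (Cplus (Cmult (RtoC s) (if Nat.leb 1 (S n) then x' (S n - 1)%nat else RtoC 0))
            (Cmult (RtoC t) (if Nat.leb 2 (S n) then x' (S n - 2)%nat else RtoC 0))))) in H.
        transitivity (Cminus (Cplus (Cplus (Cmult (RtoC r) (x (S n))) (Cmult (RtoC s) (if Nat.leb 1 (S n) then x' (S n - 1)%nat else RtoC 0)))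
          (Cmult (RtoC t) (if Nat.leb 2 (S n) then x' (S n - 2)%nat else RtoC 0))) (Cplus (Cmult (RtoC s) (if Nat.leb 1 (S n) then x' (S n - 1)%nat else RtoC 0))
            (Cmult (RtoC t) (if Nat.leb 2 (S n) then x' (S n - 2)%nat else RtoC 0)))). ring.
        rewrite H. ring. }
      apply (f_equal (Cmult (Cinv (RtoC r)))) in E. rewrite !Cmult_assoc, Cinv_l in E. rewrite !Cmult_1_l in E. auto.
      intros E'. apply Hr. injection E'. auto. }
  intros k. apply (G k). lia.
Qed.

Lemma Dz_Bx r s t x j : r <> 0 -> Dz r s t (Bx r s t x) j = x j.
Proof. intros Hr. apply (B_inj r s t); auto. intros k. apply B_Dz; auto. Qed.

Definition Delta (lam : nat -> R) (k : nat) : R := lam k - lam_m1 lam k.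
Definition yp (y : nat -> C) (k : nat) : C := match k with O => RtoC 0 | S k' => y k' end.
Definition Rel (lam : nat -> R) (y z : nat -> C) : Prop :=
  forall k, Cminus (Cmult (RtoC (lam k)) (y k)) (Cmult (RtoC (lam_m1 lam k)) (yp y k)) = Cmult (RtoC (Delta lam k)) (z k).

Lemma Delta_pos lam : lam_ok lam -> forall k, 0 < Delta lam k.
Proof.
  intros [H1 [H2 _]] k. unfold Delta. destruct k; simpl. specialize (H1 0%nat). lra. specialize (H2 k). lra.
Qed.

Lemma What_eq r s t lam x n : What r s t lam x n =
  Cmult (RtoC (/ lam n)) (csum (fun k => Cmult (RtoC (Delta lam k)) (Bx r s t x k)) (S n)).
Proof. reflexivity. Qed.

Lemma lam_What r s t lam x n : lam n <> 0 ->
  Cmult (RtoC (lam n)) (What r s t lam x n) = csum (fun k => Cmult (RtoC (Delta lam k)) (Bx r s t x k)) (S n).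
Proof.
  intros H. rewrite What_eq. rewrite Cmult_assoc. rewrite <- RtoC_mult. rewrite Rinv_r by auto. apply Cmult_1_l.
Qed.

Lemma Rel_What r s t lam x : lam_ok lam -> Rel lam (What r s t lam x) (Bx r s t x).
Proof.
  intros Hl k. assert (forall n, lam n <> 0) as Hn. { intros n. destruct Hl as [H _]. specialize (H n). lra. }
  destruct k as [|k].
  - unfold yp. simpl lam_m1. rewrite (lam_What r s t lam x 0 (Hn 0%nat)). simpl. ring.
  - unfold yp. simpl lam_m1. rewrite (lam_What r s t lam x (S k) (Hn (S k))), (lam_What r s t lam x k (Hn k)).
    change (csum ?f (S (S k))) with (Cplus (csum f (S k)) (f (S k))). cbv beta. ring.
Qed.

Lemma telescope lam y n :
  csum (fun k => Cminus (Cmult (RtoC (lam k)) (y k)) (Cmult (RtoC (lam_m1 lam k)) (yp y k))) (S n) =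
  Cmult (RtoC (lam n)) (y n).
Proof.
  induction n.
  - simpl. ring.
  - change (csum ?f (S (S n))) with (Cplus (csum f (S n)) (f (S n))). rewrite IHn. simpl. ring.
Qed.

Definition zofy (lam : nat -> R) (y : nat -> C) (k : nat) : C :=
  Cmult (RtoC (/ Delta lam k)) (Cminus (Cmult (RtoC (lam k)) (y k)) (Cmult (RtoC (lam_m1 lam k)) (yp y k))).

Lemma Rel_zofy lam y : lam_ok lam -> Rel lam y (zofy lam y).
Proof.
  intros Hl k. unfold zofy. rewrite Cmult_assoc, <- RtoC_mult, Rinv_r. ring.
  pose proof (Delta_pos lam Hl k). lra.
Qed.

Definition xofy r s t lam y := Dz r s t (zofy lam y).

Lemma What_xofy r s t lam y n : r <> 0 -> lam_ok lam -> What r s t lam (xofy r s t lam y) n = y n.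
Proof.
  intros Hr Hl. rewrite What_eq. unfold xofy.
  rewrite (csum_ext_lt _ (fun k => Cmult (RtoC (Delta lam k)) (zofy lam y k))).
  2:{ intros k _. rewrite B_Dz; auto. }
  rewrite (csum_ext_lt _ (fun k => Cminus (Cmult (RtoC (lam k)) (y k)) (Cmult (RtoC (lam_m1 lam k)) (yp y k)))).
  2:{ intros k _. symmetry. apply Rel_zofy; auto. }
  rewrite telescope. rewrite Cmult_assoc, <- RtoC_mult, Rinv_l. ring.
  destruct Hl as [H _]. specialize (H n). lra.
Qed.


Lemma csum_swap (f : nat -> nat -> C) N M :
  csum (fun j => csum (fun i => f i j) M) N = csum (fun i => csum (fun j => f i j) N) M.
Proof.
  induction N; simpl.
  - rewrite csum_zero. auto.
  - rewrite IHN. rewrite <- csum_plus. auto.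
Qed.

Lemma csum_extend (g : nat -> C) n M : (n <= M)%nat ->
  csum g n = csum (fun i => if Nat.ltb i n then g i else RtoC 0) M.
Proof.
  intros H. replace M with (n + (M - n))%nat by lia. rewrite csum_split.
  rewrite (csum_ext_lt (fun i => if Nat.ltb i n then g i else RtoC 0) g).
  2:{ intros k Hk. destruct (Nat.ltb_spec k n); auto. lia. }
  rewrite (csum_ext_lt (fun k => if Nat.ltb (n + k) n then g (n + k)%nat else RtoC 0) (fun _ => RtoC 0)). rewrite csum_zero. ring.
  intros k Hk. destruct (Nat.ltb_spec (n + k) n); auto. lia.
Qed.

Lemma csum_shift1 (g : nat -> C) m : csum g (S m) = Cplus (g 0%nat) (csum (fun k => g (S k)) m).
Proof.
  induction m. simpl. ring.
  change (csum g (S (S m))) with (Cplus (csum g (S m)) (g (S m))). rewrite IHm. simpl. ring.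
Qed.

Lemma csum_scal_r (f : nat -> C) c m : csum (fun k => Cmult (f k) c) m = Cmult (csum f m) c.
Proof. rewrite (csum_ext_lt _ (fun k => Cmult c (f k))). rewrite csum_scal. ring. intros; ring. Qed.

Lemma dasum_alt r s t a n i m : (i <= m)%nat ->
  dasum r s t a n i m = csum (fun j => if Nat.leb i j then Cmult (RtoC (dseq r s t (j - i))) (a n j) else RtoC 0) (S m).
Proof.
  intros H. unfold dasum. replace (S m) with (i + S (m - i))%nat by lia. rewrite csum_split.
  rewrite (csum_ext_lt _ (fun _ => RtoC 0) i). rewrite csum_zero.
  2:{ intros k Hk. destruct (Nat.leb_spec i k); auto. lia. }
  rewrite Cplus_0_l. apply csum_ext_lt. intros k Hk. unfold dmat.
  destruct (Nat.leb_spec i (i + k)); [|lia]. replace (i + k - i)%nat with k by lia. auto.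
Qed.

Definition bc (r : R) (lam : nat -> R) (a : nat -> nat -> C) (n m : nat) : C :=
  Cmult (RtoC (/ r * (lam m / (lam m - lam_m1 lam m)))) (a n m).

Lemma step1 r s t a n x z m : (forall j, x j = Dz r s t z j) ->
  csum (Arow a x n) (S m) = csum (fun i => Cmult (dasum r s t a n i m) (z i)) (S m).
Proof.
  intros Hx. unfold Arow.
  rewrite (csum_ext_lt _ (fun j => csum (fun i => if Nat.ltb i (S j) then Cmult (a n j) (Cmult (RtoC (dseq r s t (j - i))) (z i)) else RtoC 0) (S m))).
  2:{ intros j Hj. rewrite Hx. unfold Dz. rewrite <- csum_scal. apply csum_extend. lia. }
  rewrite csum_swap. apply csum_ext_lt. intros i Hi. rewrite dasum_alt by lia.
  rewrite <- csum_scal_r. apply csum_ext_lt. intros j Hj. cbn [Nat.ltb].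
  change (Nat.ltb i (S j)) with (Nat.leb i j). destruct (Nat.leb i j); [ring | rewrite Cmult_0_l; reflexivity].
Qed.

Lemma dasum_diag r s t a n m : dasum r s t a n m m = Cmult (RtoC (/ r)) (a n m).
Proof.
  unfold dasum. rewrite Nat.sub_diag. simpl. unfold dmat. rewrite Nat.add_0_r, Nat.leb_refl, Nat.sub_diag.
  rewrite dseq_0. ring.
Qed.

Lemma main_identity r s t lam a n x y z m : r <> 0 -> lam_ok lam -> Rel lam y z ->
  (forall j, x j = Dz r s t z j) ->
  csum (Arow a x n) (S m) =
  Cplus (csum (fun k => Cmult (ghat_m r s t lam a n k m) (y k)) m) (Cmult (bc r lam a n m) (y m)).
Proof.
  intros Hr Hl HR Hx. rewrite (step1 r s t a n x z m Hx).
  assert (Hz : forall i, z i = Cmult (RtoC (/ Delta lam i))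
     (Cminus (Cmult (RtoC (lam i)) (y i)) (Cmult (RtoC (lam_m1 lam i)) (yp y i)))).
  { intros i. rewrite HR. rewrite Cmult_assoc, <- RtoC_mult, Rinv_l. ring. pose proof (Delta_pos lam Hl i). lra. }
  set (S_ := fun i => dasum r s t a n i m).
  rewrite (csum_ext_lt _ (fun i => Cminus (Cmult (Cmult (S_ i) (RtoC (/ Delta lam i))) (Cmult (RtoC (lam i)) (y i)))
            (Cmult (Cmult (S_ i) (RtoC (/ Delta lam i))) (Cmult (RtoC (lam_m1 lam i)) (yp y i))))).
  2:{ intros i _. rewrite Hz. unfold S_. ring. }
  unfold Cminus. rewrite csum_plus, csum_opp.
  rewrite csum_shift1 with (g := fun i => Cmult (Cmult (S_ i) (RtoC (/ Delta lam i))) (Cmult (RtoC (lam_m1 lam i)) (yp y i))).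
  change (csum ?f (S m)) with (Cplus (csum f m) (f m)).
  cbv beta. simpl lam_m1 at 1. simpl yp at 1.
  unfold ghat_m. unfold Cminus.
  rewrite (csum_ext_lt (fun k => Cmult (Cmult (RtoC (lam k)) (Cplus (Cmult (RtoC (/ (lam k - lam_m1 lam k))) (dasum r s t a n k m))
    (Copp (Cmult (RtoC (/ (lam (S k) - lam k))) (dasum r s t a n (S k) m))))) (y k))
    (fun k => Cplus (Cmult (Cmult (S_ k) (RtoC (/ Delta lam k))) (Cmult (RtoC (lam k)) (y k)))
       (Copp (Cmult (Cmult (S_ (S k)) (RtoC (/ Delta lam (S k)))) (Cmult (RtoC (lam_m1 lam (S k))) (yp y (S k))))))).
  2:{ intros k _. unfold S_, Delta. simpl. ring. }
  rewrite csum_plus, csum_opp.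
  unfold bc. unfold S_. rewrite dasum_diag. unfold Rdiv. rewrite !RtoC_mult. unfold Delta. ring.
Qed.


Definition c0 (y : nat -> C) : Prop := is_lim_seq (fun k => Cmod (y k)) 0.

Lemma c0_spec y : c0 y -> forall eps, 0 < eps -> exists N, forall k, (N <= k)%nat -> Cmod (y k) < eps.
Proof.
  intros H eps He. apply RL_is_lim in H. destruct (H eps He) as [N HN]. exists N. intros k Hk.
  specialize (HN k Hk). rewrite Rminus_0_r, Rabs_pos_eq in HN by apply Cmod_ge_0. auto.
Qed.

Lemma c0_intro y : (forall eps, 0 < eps -> exists N, forall k, (N <= k)%nat -> Cmod (y k) <= eps) -> c0 y.
Proof.
  intros H. apply RL_is_lim. intros eps He. destruct (H (eps/2)) as [N HN]. lra. exists N. intros k Hk.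
  rewrite Rminus_0_r, Rabs_pos_eq by apply Cmod_ge_0. specialize (HN k Hk). lra.
Qed.

Lemma c0_bounded y : c0 y -> exists B, 0 <= B /\ forall k, Cmod (y k) <= B.
Proof.
  intros H. destruct (Clim_bounded y (RtoC 0)) as [M HM].
  { intros e He. destruct (c0_spec y H e He) as [N HN]. exists N. intros. rewrite Cminus_0_r. auto. }
  exists (Rabs M). split. apply Rabs_pos. intros k. eapply Rle_trans. apply HM. apply Rle_abs.
Qed.

Lemma RL_plus u v lu lv : RL u lu -> RL v lv -> RL (fun n => u n + v n) (lu + lv).
Proof.
  intros Hu Hv e He. destruct (Hu (e/2)) as [N1 H1]. lra. destruct (Hv (e/2)) as [N2 H2]. lra.
  exists (N1+N2)%nat. intros n Hn. specialize (H1 n ltac:(lia)). specialize (H2 n ltac:(lia)).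
  replace (u n + v n - (lu + lv)) with ((u n - lu) + (v n - lv)) by ring.
  eapply Rle_lt_trans. apply Rabs_triang. lra.
Qed.

Lemma RL_const c : RL (fun _ => c) c.
Proof. intros e He. exists O. intros. rewrite Rminus_diag, Rabs_R0. auto. Qed.

Lemma RL_rsum (f : nat -> nat -> R) (l : nat -> R) K :
  (forall k, (k < K)%nat -> RL (fun m => f m k) (l k)) -> RL (fun m => rsum (f m) K) (rsum l K).
Proof.
  induction K; intros H; simpl. apply RL_const.
  apply (RL_plus (fun m => rsum (f m) K) (fun m => f m K)). apply IHK. intros; apply H; lia. apply H; lia.
Qed.

Lemma Clim_csum (f : nat -> nat -> C) (l : nat -> C) K :
  (forall k, (k < K)%nat -> Clim (fun m => f m k) (l k)) -> Clim (fun m => csum (f m) K) (csum l K).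
Proof.
  induction K; intros H; simpl. apply Clim_const.
  apply (Clim_plus (fun m => csum (f m) K) (fun m => f m K)). apply IHK. intros; apply H; lia. apply H; lia.
Qed.

Lemma nonneg_bounded_series (f : nat -> R) B : (forall k, 0 <= f k) -> (forall K, rsum f K <= B) ->
  exists l, RL (rsum f) l.
Proof.
  intros H0 HB. destruct (ex_finite_lim_seq_incr (rsum f) B) as [l Hl].
  intros n. simpl. pose proof (H0 n). lra. auto.
  exists l. apply RL_is_lim. auto.
Qed.

Lemma abs_conv_C (a : nat -> C) B : (forall K, rsum (fun k => Cmod (a k)) K <= B) ->
  exists l, Clim (csum a) l.
Proof.
  intros HB.
  assert (E1 : ex_series (fun k => fst (a k))).
  { apply ex_series_Rabs. destruct (nonneg_bounded_series (fun k => Rabs (fst (a k))) B) as [l Hl].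
    intros; apply Rabs_pos. intros K. eapply Rle_trans; [|apply (HB K)]. apply rsum_le. intros. apply re_le_Cmod'.
    exists l. apply ser_R. auto. }
  assert (E2 : ex_series (fun k => snd (a k))).
  { apply ex_series_Rabs. destruct (nonneg_bounded_series (fun k => Rabs (snd (a k))) B) as [l Hl].
    intros; apply Rabs_pos. intros K. eapply Rle_trans; [|apply (HB K)]. apply rsum_le. intros. apply im_le_Cmod'.
    exists l. apply ser_R. auto. }
  destruct E1 as [l1 H1]. destruct E2 as [l2 H2]. apply ser_R in H1. apply ser_R in H2.
  exists (l1, l2). apply Clim_comp. simpl. split.
  - eapply RL_ext; [|exact H1]. intros. symmetry. apply rsum_fst.
  - eapply RL_ext; [|exact H2]. intros. symmetry. apply rsum_snd.
Qed.

Lemma frac_le_1 x : 0 <= x -> x / (x + 1) <= 1.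
Proof. intros H. apply Rmult_le_reg_r with (x + 1). lra. unfold Rdiv. rewrite Rmult_assoc, Rinv_l by lra. lra. Qed.

Lemma toeplitz (c : nat -> nat -> C) (g : nat -> C) (M : R) (y : nat -> C) :
  (forall m, rsum (fun k => Cmod (c m k)) (S m) <= M) ->
  (forall k, Clim (fun m => c m k) (g k)) ->
  c0 y ->
  (forall K, rsum (fun k => Cmod (g k)) K <= M) /\
  ex_series (fun k => Cmult (g k) (y k)) /\
  Clim (fun m => csum (fun k => Cmult (c m k) (y k)) (S m)) (CSeries (fun k => Cmult (g k) (y k))).
Proof.
  intros HM Hc Hy.
  assert (M0 : 0 <= M). { eapply Rle_trans; [|apply (HM 0%nat)]. apply rsum_nonneg. intros; apply Cmod_ge_0. }
  assert (Hg : forall K, rsum (fun k => Cmod (g k)) K <= M).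
  { intros K. apply (RL_le_bound (fun m => rsum (fun k => Cmod (c m k)) K)).
    apply (RL_rsum (fun m k => Cmod (c m k))). intros k _. apply Clim_Cmod. apply Hc.
    exists K. intros m Hm. eapply Rle_trans; [|apply (HM m)]. apply rsum_mono. intros; apply Cmod_ge_0. lia. }
  destruct (c0_bounded y Hy) as [Y [Y0 HY]].
  assert (Hs : exists l, Clim (csum (fun k => Cmult (g k) (y k))) l).
  { apply (abs_conv_C _ (M * Y)). intros K. eapply Rle_trans.
    apply (rsum_le _ (fun k => Y * Cmod (g k))). intros k _. rewrite Cmod_mult.
    rewrite Rmult_comm. apply Rmult_le_compat_r. apply Cmod_ge_0. auto.
    rewrite rsum_scal. rewrite Rmult_comm. apply Rmult_le_compat_r; auto. }
  assert (Hex : ex_series (fun k => Cmult (g k) (y k))). { apply ex_series_C. auto. }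
  split; [auto|]. split; [auto|].
  pose proof (ex_series_Clim _ Hex) as HL. set (L := CSeries (fun k => Cmult (g k) (y k))) in *.
  assert (HD : Clim (fun m => csum (fun k => Cmult (Cminus (c m k) (g k)) (y k)) (S m)) (RtoC 0)).
  { intros e He.
    destruct (c0_spec y Hy (e / (4 * M + 1))) as [K HK].
    { apply Rdiv_lt_0_compat; lra. }
    assert (HF : Clim (fun m => csum (fun k => Cmult (Cminus (c m k) (g k)) (y k)) K) (RtoC 0)).
    { replace (RtoC 0) with (csum (fun _ => RtoC 0) K) by apply csum_zero.
      apply (Clim_csum (fun m k => Cmult (Cminus (c m k) (g k)) (y k))). intros k _.
      replace (RtoC 0) with (Cmult (y k) (Cminus (g k) (g k))) by ring.
      eapply Clim_ext. 2: apply (Clim_scal (y k)). 2: apply Clim_minus; [apply Hc | apply Clim_const]. intros; simpl; ring. }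
    destruct (HF (e/2)) as [N HN]. lra.
    exists (N + K)%nat. intros m Hm. rewrite Cminus_0_r.
    replace (S m) with (K + (S m - K))%nat by lia. rewrite csum_split.
    eapply Rle_lt_trans. apply Cmod_triangle.
    specialize (HN m ltac:(lia)). rewrite Cminus_0_r in HN.
    assert (Cmod (csum (fun k => Cmult (Cminus (c m (K + k)%nat) (g (K + k)%nat)) (y (K + k)%nat)) (S m - K)) <= e / 2) as HT.
    { eapply Rle_trans. apply csum_Cmod.
      eapply Rle_trans. apply (rsum_le _ (fun k => (e / (4 * M + 1)) * (Cmod (c m (K+k)%nat) + Cmod (g (K+k)%nat)))).
      { intros k _. rewrite Cmod_mult. rewrite Rmult_comm. apply Rmult_le_compat.
        apply Cmod_ge_0. apply Cmod_ge_0. left. apply HK. lia.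
        unfold Cminus. eapply Rle_trans. apply Cmod_triangle. rewrite Cmod_opp. lra. }
      rewrite rsum_scal, rsum_plus.
      assert (rsum (fun k => Cmod (c m (K + k)%nat)) (S m - K) <= M).
      { eapply Rle_trans; [|apply (HM m)]. replace (S m) with (K + (S m - K))%nat at 2 by lia.
        rewrite rsum_split. pose proof (rsum_nonneg (fun k => Cmod (c m k)) K ltac:(intros; apply Cmod_ge_0)). lra. }
      assert (rsum (fun k => Cmod (g (K + k)%nat)) (S m - K) <= M).
      { eapply Rle_trans; [|apply (Hg (K + (S m - K))%nat)].
        rewrite rsum_split. pose proof (rsum_nonneg (fun k => Cmod (g k)) K ltac:(intros; apply Cmod_ge_0)). lra. }
      assert (0 <= e / (4 * M + 1)) by (apply Rlt_le, Rdiv_lt_0_compat; lra).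
      apply Rle_trans with (e / (4 * M + 1) * (2 * M)). apply Rmult_le_compat_l; lra.
      replace (e / (4 * M + 1) * (2 * M)) with ((e/2) * (4*M/(4*M+1))) by (field; lra).
      rewrite <- (Rmult_1_r (e/2)) at 2. apply Rmult_le_compat_l. lra. apply frac_le_1. lra. }
    lra. }
  replace L with (Cplus (RtoC 0) L) by ring.
  eapply Clim_ext. 2: apply (Clim_plus _ _ _ _ HD (Clim_comp_idx _ _ S ltac:(intros N; exists N; intros; lia) HL)).
  intros m. cbv beta. rewrite <- csum_plus. apply csum_ext_lt. intros; ring.
Qed.


Lemma c0_zero : c0 (fun _ => RtoC 0).
Proof. apply c0_intro. intros e He. exists O. intros. rewrite Cmod_0. lra. Qed.

Lemma c0_plus y z : c0 y -> c0 z -> c0 (fun k => Cplus (y k) (z k)).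
Proof.
  intros Hy Hz. apply c0_intro. intros e He.
  destruct (c0_spec y Hy (e/2)) as [N1 H1]. lra. destruct (c0_spec z Hz (e/2)) as [N2 H2]. lra.
  exists (N1+N2)%nat. intros k Hk. eapply Rle_trans. apply Cmod_triangle.
  specialize (H1 k ltac:(lia)). specialize (H2 k ltac:(lia)). lra.
Qed.

Lemma c0_opp y : c0 y -> c0 (fun k => Copp (y k)).
Proof.
  intros Hy. apply c0_intro. intros e He. destruct (c0_spec y Hy e He) as [N HN]. exists N.
  intros k Hk. rewrite Cmod_opp. left. auto.
Qed.

Lemma c0_ext y z : (forall k, y k = z k) -> c0 y -> c0 z.
Proof. intros E H. replace z with y. auto. apply functional_extensionality. auto. Qed.

Lemma geo_sum (d : nat -> R) n J : (forall m, 0 <= d (S m) <= d m / 2) ->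
  rsum (fun j => d (n + j)%nat) J <= 2 * d n - 2 * d (n + J)%nat.
Proof.
  intros H. induction J; simpl. rewrite Nat.add_0_r. lra.
  rewrite Nat.add_succ_r. specialize (H (n + J)%nat). lra.
Qed.

Lemma d_nonneg (d : nat -> R) : 0 <= d 0%nat -> (forall m, 0 <= d (S m) <= d m / 2) -> forall m, 0 <= d m.
Proof. intros H0 H m. destruct m. auto. apply H. Qed.

Lemma d_small (d : nat -> R) : 0 <= d 0%nat -> (forall m, 0 <= d (S m) <= d m / 2) ->
  forall e, 0 < e -> exists n, d n <= e.
Proof.
  intros H0 H e He.
  assert (forall n, d n * INR (S n) <= d 0%nat).
  { induction n. simpl. lra. specialize (H n). rewrite S_INR. pose proof (pos_INR (S n)). rewrite S_INR in *.
    pose proof (pos_INR n). nra. }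
  destruct (INR_unbounded (d 0%nat / e)) as [n Hn]. exists n.
  specialize (H1 n). rewrite S_INR in H1. pose proof (pos_INR n). pose proof (d_nonneg d H0 H n).
  destruct (Rle_dec (d n) e) as [|Hne]; auto. exfalso. apply Rnot_le_lt in Hne.
  assert (d 0%nat / e * e = d 0%nat) by (field; lra).
  assert (INR n * e > d 0%nat / e * e) by (apply Rmult_gt_compat_r; lra).
  assert (d n * (INR n + 1) > e * (INR n + 1)) by (apply Rmult_gt_compat_r; lra). nra.
Qed.

Lemma series_tail (v : nat -> C) (d : nat -> R) :
  0 <= d 0%nat -> (forall m, 0 <= d (S m) <= d m / 2) -> (forall m, Cmod (v m) <= d m) ->
  ex_series v /\ forall n, Cmod (Cminus (CSeries v) (csum v n)) <= 2 * d n.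
Proof.
  intros H0 H Hv.
  assert (Hb : forall K, rsum (fun k => Cmod (v k)) K <= 2 * d 0%nat).
  { intros K. eapply Rle_trans. apply (rsum_le _ d). intros; auto.
    pose proof (geo_sum d 0 K H) as G. simpl in G. pose proof (d_nonneg d H0 H K). change (rsum (fun j => d j) K) with (rsum d K) in G. lra. }
  destruct (abs_conv_C v _ Hb) as [l Hl].
  assert (Hex : ex_series v) by (apply ex_series_C; eauto).
  split; auto. intros n. pose proof (ex_series_Clim v Hex) as HL.
  apply (Clim_bound (fun N => Cminus (csum v N) (csum v n))).
  - apply Clim_minus; auto. apply Clim_const.
  - exists n. intros N HN. replace N with (n + (N - n))%nat by lia. rewrite csum_split.
    replace (Cminus (Cplus (csum v n) (csum (fun k => v (n + k)%nat) (N - n))) (csum v n))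
      with (csum (fun k => v (n + k)%nat) (N - n)) by ring.
    eapply Rle_trans. apply csum_Cmod. eapply Rle_trans. apply (rsum_le _ (fun j => d (n + j)%nat)). intros; auto.
    pose proof (geo_sum d n (N - n) H). pose proof (d_nonneg d H0 H (n + (N - n))%nat). lra.
Qed.


Lemma ubp (I : Type) (q : I -> (nat -> C) -> R) (K : R) :
  1 <= K ->
  (forall i y z, c0 y -> c0 z -> q i (fun k => Cplus (y k) (z k)) <= K * (q i y + q i z)) ->
  (forall i y, c0 y -> q i (fun k => Copp (y k)) = q i y) ->
  (forall i, exists eta, 0 < eta /\ forall y, c0 y -> (forall k, Cmod (y k) <= eta) -> q i y <= 1) ->
  (forall y, c0 y -> exists M, forall i, q i y <= M) ->
  exists delta M, 0 < delta /\ forall i y, c0 y -> (forall k, Cmod (y k) <= delta) -> q i y <= M.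
Proof.
  intros HK Htri Hopp Hcont Hpw.
  apply NNPP. intros Hno.
  assert (H : forall d M, 0 < d -> exists i y, c0 y /\ (forall k, Cmod (y k) <= d) /\ M < q i y).
  { intros d M Hd. apply NNPP. intros Hn. apply Hno. exists d, M. split; auto. intros i y Hy Hb.
    apply Rnot_lt_le. intros Hlt. apply Hn. exists i, y. auto. }
  destruct (H 1 0 Rlt_0_1) as [i0 _].
  assert (Pk : forall d M, {iy : I * (nat -> C) | 0 < d -> c0 (snd iy) /\ (forall k, Cmod (snd iy k) <= d) /\ M < q (fst iy) (snd iy)}).
  { intros d M. apply constructive_indefinite_description. destruct (Rlt_dec 0 d) as [Hd|Hd].
    - destruct (H d M Hd) as [i [y Hy]]. exists (i, y). auto.
    - exists (i0, fun _ => RtoC 0). intros; lra. }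
  assert (Et : forall i, {eta : R | 0 < eta /\ forall y, c0 y -> (forall k, Cmod (y k) <= eta) -> q i y <= 1}).
  { intros i. apply constructive_indefinite_description. apply Hcont. }
  set (pick := fun d M => proj1_sig (Pk d M)).
  set (eta := fun i => proj1_sig (Et i)).
  set (T := fun n : nat => 2 * K * K * (INR n + 2)).
  set (step := fun (n : nat) (st : R * (nat -> C)) =>
     (Rmin (fst st / 2) (eta (fst (pick (fst st) (T n))) / 2),
      if Rle_dec (q (fst (pick (fst st) (T n))) (snd (pick (fst st) (T n))) / (2 * K))
                 (q (fst (pick (fst st) (T n))) (fun k => Cplus (snd st k) (snd (pick (fst st) (T n)) k)))
      then (fun k => Cplus (snd st k) (snd (pick (fst st) (T n)) k)) else snd st)).
  set (st := fix f (n : nat) : R * (nat -> C) := match n with O => (1, fun _ => RtoC 0) | S n' => step n' (f n') end).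
  set (d := fun n => fst (st n)). set (x := fun n => snd (st n)).
  set (i_ := fun n => fst (pick (d n) (T n))). set (y_ := fun n => snd (pick (d n) (T n))).
  assert (Hd0 : d 0%nat = 1) by reflexivity.
  assert (HdS : forall n, d (S n) = Rmin (d n / 2) (eta (i_ n) / 2)) by reflexivity.
  assert (Heta : forall i, 0 < eta i /\ forall y, c0 y -> (forall k, Cmod (y k) <= eta i) -> q i y <= 1).
  { intros i. apply (proj2_sig (Et i)). }
  assert (Hdpos : forall n, 0 < d n).
  { induction n. rewrite Hd0. lra. rewrite HdS. apply Rmin_pos. lra. pose proof (proj1 (Heta (i_ n))). lra. }
  assert (Hy : forall n, c0 (y_ n) /\ (forall k, Cmod (y_ n k) <= d n) /\ T n < q (i_ n) (y_ n)).
  { intros n. apply (proj2_sig (Pk (d n) (T n))). auto. }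
  assert (Hx0 : forall k, x 0%nat k = RtoC 0) by reflexivity.
  assert (HxS : forall n, x (S n) = if Rle_dec (q (i_ n) (y_ n) / (2 * K)) (q (i_ n) (fun k => Cplus (x n k) (y_ n k)))
                      then (fun k => Cplus (x n k) (y_ n k)) else x n) by reflexivity.
  set (v := fun n => if Rle_dec (q (i_ n) (y_ n) / (2 * K)) (q (i_ n) (fun k => Cplus (x n k) (y_ n k))) then y_ n else (fun _ => RtoC 0)).
  assert (HxSv : forall n k, x (S n) k = Cplus (x n k) (v n k)).
  { intros n k. rewrite HxS. unfold v. destruct (Rle_dec _ _); auto. ring. }
  assert (Hv : forall n, c0 (v n) /\ forall k, Cmod (v n k) <= d n).
  { intros n. unfold v. destruct (Rle_dec _ _). destruct (Hy n) as [? [? ?]]; split; auto. split. apply c0_zero. intros. rewrite Cmod_0. left; auto. }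
  assert (Hxc0 : forall n, c0 (x n)).
  { induction n. apply (c0_ext (fun _ => RtoC 0)); auto. apply c0_zero.
    apply (c0_ext (fun k => Cplus (x n k) (v n k))). intros; auto. apply c0_plus; auto. apply Hv. }
  assert (Hxsum : forall n k, x n k = csum (fun m => v m k) n).
  { induction n; intros k. apply Hx0. rewrite HxSv, IHn. reflexivity. }
  assert (Hdd : forall m, 0 <= d (S m) <= d m / 2).
  { intros m. rewrite HdS. split. left. apply Rmin_pos. pose proof (Hdpos m); lra. pose proof (proj1 (Heta (i_ m))); lra. apply Rmin_l. }
  assert (Hkey : forall n, q (i_ n) (y_ n) / (2 * K) <= q (i_ n) (x (S n))).
  { intros n. rewrite HxS. destruct (Rle_dec _ _) as [Hc|Hc]; auto.
    apply Rnot_le_lt in Hc.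
    assert (E : y_ n = fun k => Cplus (Cplus (x n k) (y_ n k)) (Copp (x n k))).
    { apply functional_extensionality. intros; ring. }
    pose proof (Htri (i_ n) (fun k => Cplus (x n k) (y_ n k)) (fun k => Copp (x n k))) as Ht.
    cbv beta in Ht. rewrite <- E in Ht. rewrite Hopp in Ht by auto.
    specialize (Ht (c0_plus _ _ (Hxc0 n) (proj1 (Hy n))) (c0_opp _ (Hxc0 n))).
    set (A := q (i_ n) (y_ n)) in *. set (B := q (i_ n) (fun k => Cplus (x n k) (y_ n k))) in *.
    set (Cx := q (i_ n) (x n)) in *.
    assert (A / (2 * K) * (2 * K) = A) by (field; lra).
    assert (B * (2 * K) < A) by (apply Rmult_lt_compat_r with (r := 2 * K) in Hc; lra).
    apply Rmult_le_reg_r with (2 * K). lra. nra. }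
  set (xi := fun k => CSeries (fun m => v m k)).
  assert (Htail : forall n k, Cmod (Cminus (xi k) (x n k)) <= 2 * d n).
  { intros n k. rewrite Hxsum. apply (series_tail (fun m => v m k) d). rewrite Hd0; lra. auto. intros; apply Hv. }
  assert (Hxi : c0 xi).
  { apply c0_intro. intros e He. destruct (d_small d ltac:(rewrite Hd0; lra) Hdd (e / 4)) as [n Hn]. lra.
    destruct (c0_spec (x n) (Hxc0 n) (e/2)) as [N HN]. lra. exists N. intros k Hk.
    replace (xi k) with (Cplus (x n k) (Cminus (xi k) (x n k))) by ring.
    eapply Rle_trans. apply Cmod_triangle. specialize (HN k Hk). specialize (Htail n k). lra. }
  destruct (Hpw xi Hxi) as [M HM].
  destruct (INR_unbounded M) as [n Hn].
  set (tl := fun k => Copp (Cminus (xi k) (x (S n) k))).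
  assert (Htl : c0 tl).
  { apply c0_opp. apply (c0_plus xi (fun k => Copp (x (S n) k))). auto. apply c0_opp. auto. }
  assert (Htlb : q (i_ n) tl <= 1).
  { apply (proj2 (Heta (i_ n))). auto. intros k. unfold tl. rewrite Cmod_opp. eapply Rle_trans. apply Htail.
    rewrite HdS. pose proof (Rmin_r (d n / 2) (eta (i_ n) / 2)). lra. }
  assert (Ex : x (S n) = fun k => Cplus (xi k) (tl k)). { apply functional_extensionality. intros k. unfold tl. ring. }
  pose proof (Htri (i_ n) xi tl Hxi Htl) as Ht. rewrite <- Ex in Ht.
  pose proof (Hkey n) as Hk. pose proof (proj2 (proj2 (Hy n))) as HT. specialize (HM (i_ n)).
  unfold T in HT.
  set (A := q (i_ n) (y_ n)) in *. set (B := q (i_ n) (x (S n))) in *. set (Q := q (i_ n) xi) in *.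
  assert (A / (2 * K) * (2 * K) = A) by (field; lra).
  assert (B <= K * (Q + 1)) by nra.
  assert (A <= 2 * K * B) by nra.
  assert (2 * K * K * (INR n + 2) < 2 * K * (K * (Q + 1))) by nra.
  assert (INR n + 2 < Q + 1) by nra.
  lra.
Qed.


Lemma exp_mono_le x y : x <= y -> exp x <= exp y.
Proof. intros [H|H]. left. apply exp_increasing. auto. subst. lra. Qed.

Lemma powp_pos x p : 0 < x -> powp x p = Rpower x p.
Proof. intros H. unfold powp. destruct (Rle_dec x 0). lra. auto. Qed.
Lemma powp_0 p : powp 0 p = 0.
Proof. unfold powp. destruct (Rle_dec 0 0). auto. lra. Qed.
Lemma powp_nonneg x p : 0 <= powp x p.
Proof. unfold powp. destruct (Rle_dec x 0). lra. unfold Rpower. left. apply exp_pos. Qed.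

Lemma powp_mono x y p : 0 <= p -> 0 <= x <= y -> powp x p <= powp y p.
Proof.
  intros Hp [Hx Hxy]. destruct Hx as [Hx|Hx].
  - rewrite !powp_pos by lra. apply Rle_Rpower_l; lra.
  - subst. rewrite powp_0. apply powp_nonneg.
Qed.

Lemma powp_mult c x p : 0 <= c -> 0 <= x -> powp (c * x) p = powp c p * powp x p.
Proof.
  intros Hc Hx. destruct Hc as [Hc|Hc]; [destruct Hx as [Hx|Hx]|].
  - rewrite !powp_pos; auto. symmetry. apply Rpower_mult_distr; auto. apply Rmult_lt_0_compat; auto.
  - subst. rewrite Rmult_0_r, powp_0. ring.
  - subst. rewrite Rmult_0_l, powp_0. ring.
Qed.

Lemma powp_le_self B p : 1 <= p -> 0 <= B <= 1 -> powp B p <= B.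
Proof.
  intros Hp [HB HB1]. destruct HB as [HB|HB].
  - rewrite powp_pos by auto. unfold Rpower. rewrite <- (exp_ln B) at 2 by auto. apply exp_mono_le.
    assert (ln B <= 0). { destruct HB1 as [HB1|HB1]. rewrite <- ln_1. left. apply ln_increasing; auto. subst. rewrite ln_1. lra. }
    nra.
  - subst. rewrite powp_0. lra.
Qed.

Lemma amgm u a : 0 < u -> 0 <= a <= 1 -> Rpower u a <= a * u + (1 - a).
Proof.
  intros Hu Ha. unfold Rpower. set (L := ln u). set (m := a * L).
  assert (E1 : exp m * (1 + L - m) <= exp L).
  { replace (exp L) with (exp m * exp (L - m)) by (rewrite <- exp_plus; f_equal; ring).
    apply Rmult_le_compat_l. left; apply exp_pos. pose proof (exp_ineq1_le (L - m)). lra. }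
  assert (E2 : exp m * (1 + 0 - m) <= exp 0).
  { replace (exp 0) with (exp m * exp (0 - m)) by (rewrite <- exp_plus; f_equal; ring).
    apply Rmult_le_compat_l. left; apply exp_pos. pose proof (exp_ineq1_le (0 - m)). lra. }
  rewrite exp_0 in E2. unfold L in E1. rewrite exp_ln in E1 by auto. fold L in E1.
  replace (a * L) with m by reflexivity.
  assert (exp m = a * (exp m * (1 + L - m)) + (1 - a) * (exp m * (1 + 0 - m))) by (unfold m; ring).
  nra.
Qed.

Lemma bernoulli x p : 1 <= p -> 0 <= x -> 1 + p * (x - 1) <= powp x p.
Proof.
  intros Hp [Hx|Hx].
  - rewrite powp_pos by auto. set (u := Rpower x p).
    assert (Hu : 0 < u) by (unfold u, Rpower; apply exp_pos).
    pose proof (amgm u (/ p) Hu) as H. assert (0 <= / p <= 1).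
    { split. left. apply Rinv_0_lt_compat. lra. rewrite <- Rinv_1. apply Rinv_le_contravar; lra. }
    specialize (H H0). unfold u in H. rewrite Rpower_mult in H. rewrite Rinv_r in H by lra. rewrite Rpower_1 in H by auto.
    apply Rmult_le_compat_l with (r := p) in H. 2: lra.
    replace (p * (/ p * Rpower x p + (1 - / p))) with (Rpower x p + p - 1) in H by (field; lra). fold u in H |- *. lra.
  - subst. rewrite powp_0. lra.
Qed.

Lemma powp_convex a b th p : 1 <= p -> 0 <= a -> 0 <= b -> 0 <= th <= 1 ->
  powp (th * a + (1 - th) * b) p <= th * powp a p + (1 - th) * powp b p.
Proof.
  intros Hp Ha Hb Ht. set (c := th * a + (1 - th) * b).
  assert (Hc : 0 <= c) by (unfold c; nra).
  destruct Hc as [Hc|Hc].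
  - assert (Ea : a = c * (a / c)) by (field; lra). assert (Eb : b = c * (b / c)) by (field; lra).
    rewrite Ea at 1. rewrite Eb at 1. rewrite !powp_mult; try lra.
    2: apply Rdiv_le_0_compat; lra. 2: apply Rdiv_le_0_compat; lra.
    pose proof (bernoulli (a / c) p Hp ltac:(apply Rdiv_le_0_compat; lra)).
    pose proof (bernoulli (b / c) p Hp ltac:(apply Rdiv_le_0_compat; lra)).
    assert (th * (1 + p * (a / c - 1)) + (1 - th) * (1 + p * (b / c - 1)) = 1).
    { replace (th * (1 + p * (a / c - 1)) + (1 - th) * (1 + p * (b / c - 1))) with (1 + p * ((th * a + (1 - th) * b) / c - 1)) by (field; lra).
      fold c. replace (c / c) with 1 by (field; lra). ring. }
    pose proof (powp_nonneg c p).
    assert (th * powp (a / c) p + (1 - th) * powp (b / c) p >= 1) by nra.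
    nra.
  - rewrite <- Hc, powp_0. pose proof (powp_nonneg a p). pose proof (powp_nonneg b p). nra.
Qed.


Definition Phi (g : nat -> nat -> C) (p : R) (N K : nat) (w : nat -> C) : R :=
  rsum (fun n => powp (Cmod (csum (fun k => Cmult (g n k) (w k)) K)) p) N.

Definition condA (g : nat -> nat -> C) (p M : R) : Prop :=
  forall F, NoDup F -> forall N, rsum (fun n => powp (Cmod (csum_list (g n) F)) p) N <= M.

Lemma csum_list_app g l1 l2 : csum_list g (l1 ++ l2) = Cplus (csum_list g l1) (csum_list g l2).
Proof. induction l1; simpl. ring. rewrite IHl1. ring. Qed.

Definition bsel (u : nat -> R) (k : nat) : bool := if Req_EM_T (u k) 1 then true else false.

Lemma csum_filter g u K : (forall k, (k < K)%nat -> u k = 0 \/ u k = 1) ->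
  csum (fun k => Cmult (g k) (RtoC (u k))) K = csum_list g (filter (bsel u) (seq 0 K)).
Proof.
  induction K; intros H. reflexivity.
  rewrite seq_S, filter_app, csum_list_app. simpl. rewrite IHK by (intros; apply H; lia).
  destruct (Req_EM_T (u K) 1) as [E|E].
  - assert (Hb: bsel u K = true) by (unfold bsel; destruct (Req_EM_T (u K) 1); [auto|contradiction]).
    rewrite Hb. simpl. rewrite E. ring.
  - assert (Hb: bsel u K = false) by (unfold bsel; destruct (Req_EM_T (u K) 1); [contradiction|auto]).
    rewrite Hb. simpl. destruct (H K ltac:(lia)) as [E'|E']; [|contradiction]. rewrite E'. ring.
Qed.

Lemma box_base g p M N K : condA g p M -> forall u, (forall k, (k < K)%nat -> u k = 0 \/ u k = 1) ->
  Phi g p N K (fun k => RtoC (u k)) <= M.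
Proof.
  intros HA u Hu. unfold Phi. rewrite (rsum_ext_lt _ (fun n => powp (Cmod (csum_list (g n) (filter (bsel u) (seq 0 K)))) p)).
  apply HA. apply NoDup_filter. apply seq_NoDup.
  intros n _. rewrite csum_filter; auto.
Qed.

Lemma convex_step g p N K (u u0 u1 : nat -> R) th : 1 <= p -> 0 <= th <= 1 ->
  (forall k, u k = (1 - th) * u0 k + th * u1 k) ->
  Phi g p N K (fun k => RtoC (u k)) <= (1 - th) * Phi g p N K (fun k => RtoC (u0 k)) + th * Phi g p N K (fun k => RtoC (u1 k)).
Proof.
  intros Hp Ht Hu. unfold Phi. rewrite <- !rsum_scal, <- rsum_plus. apply rsum_le. intros n _.
  set (A := csum (fun k => Cmult (g n k) (RtoC (u0 k))) K).
  set (B := csum (fun k => Cmult (g n k) (RtoC (u1 k))) K).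
  assert (E : csum (fun k => Cmult (g n k) (RtoC (u k))) K = Cplus (Cmult (RtoC (1 - th)) A) (Cmult (RtoC th) B)).
  { unfold A, B. rewrite <- !csum_scal, <- csum_plus. apply csum_ext_lt. intros k _. rewrite Hu.
    rewrite RtoC_plus, !RtoC_mult. ring. }
  rewrite E. eapply Rle_trans. apply powp_mono. lra. split. apply Cmod_ge_0.
  eapply Rle_trans. apply Cmod_triangle. rewrite !Cmod_mult, !Cmod_R, !Rabs_pos_eq by lra. apply Rle_refl.
  replace ((1 - th) * Cmod A + th * Cmod B) with ((1 - th) * Cmod A + (1 - (1 - th)) * Cmod B) by ring.
  eapply Rle_trans. apply powp_convex; auto. apply Cmod_ge_0. apply Cmod_ge_0. lra.
  replace (1 - (1 - th)) with th by ring. lra.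
Qed.

Lemma box_real g p M N K : 1 <= p -> condA g p M -> forall u, (forall k, 0 <= u k <= 1) ->
  Phi g p N K (fun k => RtoC (u k)) <= M.
Proof.
  intros Hp HA.
  assert (P : forall j u, (forall k, 0 <= u k <= 1) -> (forall k, (j <= k)%nat -> (k < K)%nat -> u k = 0 \/ u k = 1) ->
     Phi g p N K (fun k => RtoC (u k)) <= M).
  { induction j; intros u Hb Hj.
    - apply box_base; auto. intros k Hk. apply Hj; lia.
    - set (u0 := fun k => if Nat.eqb k j then 0 else u k).
      set (u1 := fun k => if Nat.eqb k j then 1 else u k).
      assert (H0 : Phi g p N K (fun k => RtoC (u0 k)) <= M).
      { apply IHj. intros k. unfold u0. destruct (Nat.eqb k j). lra. auto.
        intros k Hk1 Hk2. unfold u0. destruct (Nat.eqb_spec k j). auto. apply Hj; lia. }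
      assert (H1 : Phi g p N K (fun k => RtoC (u1 k)) <= M).
      { apply IHj. intros k. unfold u1. destruct (Nat.eqb k j). lra. auto.
        intros k Hk1 Hk2. unfold u1. destruct (Nat.eqb_spec k j). auto. apply Hj; lia. }
      eapply Rle_trans. apply (convex_step g p N K u u0 u1 (u j)); auto.
      intros k. unfold u0, u1. destruct (Nat.eqb_spec k j). subst. ring. ring.
      pose proof (Hb j). nra. }
  intros u Hb. apply (P K); auto. intros; lia.
Qed.

Lemma powp_max x y p : powp (Rmax x y) p <= powp x p + powp y p.
Proof. unfold Rmax. destruct (Rle_dec x y); pose proof (powp_nonneg x p); pose proof (powp_nonneg y p); lra. Qed.

Lemma powp_sum4 a1 a2 a3 a4 p : 0 <= p -> 0 <= a1 -> 0 <= a2 -> 0 <= a3 -> 0 <= a4 ->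
  powp (a1 + a2 + a3 + a4) p <= powp 4 p * (powp a1 p + powp a2 p + powp a3 p + powp a4 p).
Proof.
  intros Hp H1 H2 H3 H4. set (m := Rmax (Rmax a1 a2) (Rmax a3 a4)).
  assert (a1 <= m /\ a2 <= m /\ a3 <= m /\ a4 <= m).
  { unfold m. pose proof (Rmax_l a1 a2). pose proof (Rmax_r a1 a2). pose proof (Rmax_l a3 a4). pose proof (Rmax_r a3 a4).
    pose proof (Rmax_l (Rmax a1 a2) (Rmax a3 a4)). pose proof (Rmax_r (Rmax a1 a2) (Rmax a3 a4)). lra. }
  eapply Rle_trans. apply (powp_mono _ (4 * m)). auto. lra.
  rewrite powp_mult by lra. apply Rmult_le_compat_l. apply powp_nonneg.
  unfold m. eapply Rle_trans. apply powp_max. pose proof (powp_max a1 a2 p). pose proof (powp_max a3 a4 p). lra.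
Qed.

Lemma box_complex g p M N K : 1 <= p -> condA g p M -> forall w, (forall k, Cmod (w k) <= 1) ->
  Phi g p N K w <= powp 4 p * (4 * M).
Proof.
  intros Hp HA w Hw.
  set (u1 := fun k => Rmax (fst (w k)) 0). set (u2 := fun k => Rmax (- fst (w k)) 0).
  set (u3 := fun k => Rmax (snd (w k)) 0). set (u4 := fun k => Rmax (- snd (w k)) 0).
  assert (Hbox : forall k, 0 <= u1 k <= 1 /\ 0 <= u2 k <= 1 /\ 0 <= u3 k <= 1 /\ 0 <= u4 k <= 1).
  { intros k. pose proof (re_le_Cmod' (w k)). pose proof (im_le_Cmod' (w k)). specialize (Hw k).
    unfold u1, u2, u3, u4. apply Rabs_def2b' in H || idtac.
    unfold Rmax; repeat destruct (Rle_dec _ _); split_Rabs; repeat split; lra. }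
  assert (Ew : forall k, w k = Cplus (Cminus (RtoC (u1 k)) (RtoC (u2 k))) (Cmult Ci (Cminus (RtoC (u3 k)) (RtoC (u4 k))))).
  { intros k. unfold u1, u2, u3, u4. destruct (w k) as [x y]. apply injective_projections; simpl;
    unfold Rmax; repeat destruct (Rle_dec _ _); lra. }
  pose proof (box_real g p M N K Hp HA u1 ltac:(intros; apply Hbox)) as B1.
  pose proof (box_real g p M N K Hp HA u2 ltac:(intros; apply Hbox)) as B2.
  pose proof (box_real g p M N K Hp HA u3 ltac:(intros; apply Hbox)) as B3.
  pose proof (box_real g p M N K Hp HA u4 ltac:(intros; apply Hbox)) as B4.
  unfold Phi in *.
  apply Rle_trans with (powp 4 p * (rsum (fun n => powp (Cmod (csum (fun k => Cmult (g n k) (RtoC (u1 k)))K)) p) N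
     + rsum (fun n => powp (Cmod (csum (fun k => Cmult (g n k) (RtoC (u2 k)))K)) p) N
     + rsum (fun n => powp (Cmod (csum (fun k => Cmult (g n k) (RtoC (u3 k)))K)) p) N
     + rsum (fun n => powp (Cmod (csum (fun k => Cmult (g n k) (RtoC (u4 k)))K)) p) N)).
  2:{ apply Rmult_le_compat_l. apply powp_nonneg. lra. }
  rewrite <- !rsum_plus, <- rsum_scal. apply rsum_le. intros n _.
  set (S1 := csum (fun k => Cmult (g n k) (RtoC (u1 k))) K).
  set (S2 := csum (fun k => Cmult (g n k) (RtoC (u2 k))) K).
  set (S3 := csum (fun k => Cmult (g n k) (RtoC (u3 k))) K).
  set (S4 := csum (fun k => Cmult (g n k) (RtoC (u4 k))) K).
  assert (E : csum (fun k => Cmult (g n k) (w k)) K = Cplus (Cminus S1 S2) (Cmult Ci (Cminus S3 S4))).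
  { unfold S1, S2, S3, S4. unfold Cminus. rewrite <- !csum_opp, <- !csum_plus, <- csum_scal, <- csum_plus.
    apply csum_ext_lt. intros k _. rewrite Ew. ring. }
  rewrite E. eapply Rle_trans. apply (powp_mono _ (Cmod S1 + Cmod S2 + Cmod S3 + Cmod S4)). lra.
  split. apply Cmod_ge_0. eapply Rle_trans. apply Cmod_triangle. rewrite Cmod_mult, Cmod_Ci.
  unfold Cminus. pose proof (Cmod_triangle S1 (Copp S2)). pose proof (Cmod_triangle S3 (Copp S4)). rewrite Cmod_opp in *. lra.
  apply powp_sum4; try apply Cmod_ge_0. lra.
Qed.


Lemma ev_all (P : nat -> nat -> Prop) N :
  (forall n, (n < N)%nat -> exists K0, forall K, (K0 <= K)%nat -> P n K) ->
  exists K0, forall n K, (n < N)%nat -> (K0 <= K)%nat -> P n K.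
Proof.
  induction N; intros H. exists O. intros; lia.
  destruct IHN as [K1 H1]. intros; apply H; lia. destruct (H N ltac:(lia)) as [K2 H2].
  exists (K1 + K2)%nat. intros n K Hn HK. destruct (Nat.eq_dec n N). subst. apply H2; lia. apply H1; lia.
Qed.

Lemma ev_half (u : nat -> C) l : Clim u l -> exists K0, forall K, (K0 <= K)%nat -> Cmod l <= 2 * Cmod (u K).
Proof.
  intros H. destruct (Req_dec (Cmod l) 0) as [E|E].
  - exists O. intros. rewrite E. pose proof (Cmod_ge_0 (u K)). lra.
  - pose proof (Cmod_ge_0 l). destruct (Clim_Cmod u l H (Cmod l / 2)) as [K0 HK]. lra.
    exists K0. intros K HKK. specialize (HK K HKK). apply Rabs_def2 in HK. lra.
Qed.

Lemma row_lim (g : nat -> C) y B : (forall K, rsum (fun k => Cmod (g k)) K <= B) -> c0 y ->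
  Clim (csum (fun k => Cmult (g k) (y k))) (CSeries (fun k => Cmult (g k) (y k))).
Proof.
  intros HB Hy. destruct (c0_bounded y Hy) as [Y [Y0 HY]].
  apply ex_series_Clim. apply ex_series_C. apply (abs_conv_C _ (B * Y)). intros K.
  eapply Rle_trans. apply (rsum_le _ (fun k => Y * Cmod (g k))). intros k _. rewrite Cmod_mult.
  rewrite Rmult_comm. apply Rmult_le_compat_r. apply Cmod_ge_0. auto.
  rewrite rsum_scal. rewrite Rmult_comm. apply Rmult_le_compat_r; auto.
Qed.

Lemma lp_suff g p M : 1 <= p -> condA g p M ->
  (forall n, exists B, forall K, rsum (fun k => Cmod (g n k)) K <= B) ->
  forall y, c0 y -> ex_series (fun n => powp (Cmod (CSeries (fun k => Cmult (g n k) (y k)))) p).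
Proof.
  intros Hp HA Hrow y Hy. destruct (c0_bounded y Hy) as [Y0 [HY0 HY]]. set (Y := Y0 + 1).
  assert (HYp : 0 < Y) by (unfold Y; lra).
  set (C1 := powp Y p * (powp 4 p * (4 * M))).
  assert (Hbox : forall N K, Phi g p N K y <= C1).
  { intros N K. set (w := fun k => Cmult (RtoC (/ Y)) (y k)).
    assert (Hw : forall k, Cmod (w k) <= 1).
    { intros k. unfold w. rewrite Cmod_mult, Cmod_R, Rabs_pos_eq. 2: left; apply Rinv_0_lt_compat; auto.
      apply Rmult_le_reg_l with Y. auto. rewrite <- Rmult_assoc, Rinv_r by (unfold Y; lra). specialize (HY k). unfold Y. lra. }
    pose proof (box_complex g p M N K Hp HA w Hw) as Hb.
    unfold C1. replace (Phi g p N K y) with (powp Y p * Phi g p N K w). apply Rmult_le_compat_l. apply powp_nonneg. auto.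
    unfold Phi. rewrite <- rsum_scal. apply rsum_ext_lt. intros n _.
    rewrite <- powp_mult by (lra || apply Cmod_ge_0). f_equal.
    replace (csum (fun k => Cmult (g n k) (y k)) K) with (Cmult (RtoC Y) (csum (fun k => Cmult (g n k) (w k)) K)).
    rewrite Cmod_mult, Cmod_R, Rabs_pos_eq by lra. auto.
    rewrite <- csum_scal. apply csum_ext_lt. intros k _. unfold w.
    transitivity (Cmult (Cmult (RtoC Y) (RtoC (/ Y))) (Cmult (g n k) (y k))). ring.
    rewrite <- RtoC_mult, Rinv_r by lra. ring. }
  set (L := fun n => CSeries (fun k => Cmult (g n k) (y k))).
  assert (HL : forall n, Clim (csum (fun k => Cmult (g n k) (y k))) (L n)).
  { intros n. destruct (Hrow n) as [B HB]. apply (row_lim _ _ B); auto. }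
  destruct (nonneg_bounded_series (fun n => powp (Cmod (L n)) p) (powp 2 p * C1)) as [l Hl].
  - intros; apply powp_nonneg.
  - intros N. destruct (ev_all (fun n K => Cmod (L n) <= 2 * Cmod (csum (fun k => Cmult (g n k) (y k)) K)) N) as [K0 HK0].
    { intros n _. apply ev_half. auto. }
    eapply Rle_trans. apply (rsum_le _ (fun n => powp 2 p * powp (Cmod (csum (fun k => Cmult (g n k) (y k)) K0)) p)).
    { intros n Hn. rewrite <- powp_mult by (lra || apply Cmod_ge_0). apply powp_mono. lra. split. apply Cmod_ge_0. apply HK0; auto. }
    rewrite rsum_scal. apply Rmult_le_compat_l. apply powp_nonneg. apply Hbox.
  - exists l. apply ser_R. auto.
Qed.


Definition sgn (c : C) : C := Cmult (Cconj c) (RtoC (/ Cmod c)).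

Lemma sgn_mul c : Cmult c (sgn c) = RtoC (Cmod c).
Proof.
  unfold sgn. destruct (Req_dec (Cmod c) 0) as [E|E].
  - apply Cmod_eq_0 in E. subst. rewrite Cmod_0. ring.
  - rewrite Cmult_assoc. rewrite <- Cmod2_conj. rewrite <- RtoC_mult. f_equal. field. auto.
Qed.

Lemma sgn_bound c : Cmod (sgn c) <= 1.
Proof.
  unfold sgn. rewrite Cmod_mult, Cmod_conj, Cmod_R. destruct (Req_dec (Cmod c) 0) as [E|E].
  - rewrite E. rewrite Rinv_0, Rabs_R0. lra.
  - pose proof (Cmod_ge_0 c). rewrite Rabs_pos_eq. rewrite Rinv_r; lra. left. apply Rinv_0_lt_compat. lra.
Qed.

Lemma csum_zero_tail (w : nat -> C) K0 K : (K0 <= K)%nat -> (forall k, (K0 <= k)%nat -> w k = RtoC 0) ->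
  csum w K = csum w K0.
Proof.
  intros H Hz. replace K with (K0 + (K - K0))%nat by lia. rewrite csum_split.
  rewrite (csum_ext_lt (fun k => w (K0 + k)%nat) (fun _ => RtoC 0)). rewrite csum_zero. ring. intros. apply Hz. lia.
Qed.

Lemma CSeries_finite (w : nat -> C) K0 : (forall k, (K0 <= k)%nat -> w k = RtoC 0) -> CSeries w = csum w K0.
Proof.
  intros Hz. apply CSeries_Clim. apply (Clim_ext_ev (fun _ => csum w K0)). exists K0. intros. symmetry. apply csum_zero_tail; auto.
  apply Clim_const.
Qed.

Lemma c0_finite (y : nat -> C) K0 : (forall k, (K0 <= k)%nat -> y k = RtoC 0) -> c0 y.
Proof. intros H. apply c0_intro. intros e He. exists K0. intros k Hk. rewrite H by auto. rewrite Cmod_0. lra. Qed.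

Definition ind (F : list nat) (k : nat) : C := if in_dec Nat.eq_dec k F then RtoC 1 else RtoC 0.

Lemma csum_ind (g : nat -> C) F K : NoDup F -> (forall a, In a F -> (a < K)%nat) ->
  csum (fun k => Cmult (g k) (ind F k)) K = csum_list g F.
Proof.
  induction F as [|a F IH]; intros HN HF.
  - simpl. unfold ind. simpl. rewrite (csum_ext_lt _ (fun _ => RtoC 0)). apply csum_zero. intros; ring.
  - inversion HN; subst. simpl.
    rewrite (csum_ext_lt _ (fun k => Cplus (if Nat.eqb k a then g k else RtoC 0) (Cmult (g k) (ind F k)))).
    rewrite csum_plus. rewrite csum_delta by (apply HF; simpl; auto). rewrite IH; auto. intros; apply HF; simpl; auto.
    intros k _. unfold ind. destruct (Nat.eqb_spec k a).
    + subst. destruct (in_dec Nat.eq_dec a (a :: F)) as [_|Hn]; [|simpl in Hn; tauto].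
      destruct (in_dec Nat.eq_dec a F); [contradiction|]. ring.
    + destruct (in_dec Nat.eq_dec k (a :: F)) as [Hi|Hi]; destruct (in_dec Nat.eq_dec k F) as [Hj|Hj].
      * ring.
      * simpl in Hi. destruct Hi; [congruence|contradiction].
      * exfalso. apply Hi. simpl. auto.
      * ring.
Qed.

Lemma list_bound (F : list nat) : exists K, forall a, In a F -> (a < K)%nat.
Proof.
  exists (S (list_max F)). intros a Ha. pose proof (proj1 (list_max_le F (list_max F)) (le_n _)) as H.
  rewrite Forall_forall in H. specialize (H a Ha). lia.
Qed.

Lemma rsum_le_series (f : nat -> R) N : (forall n, 0 <= f n) -> ex_series f -> rsum f N <= Series f.
Proof.
  intros H0 He. pose proof (Series_correct f He) as H. apply ser_R in H.
  apply (RL_ge_bound _ _ _ H). exists N. intros n Hn. apply rsum_mono; auto.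
Qed.

Lemma finite_rows (g : nat -> nat -> C) N :
  (forall n, exists B, forall K, rsum (fun k => Cmod (g n k)) K <= B) ->
  exists B, 0 <= B /\ forall n K, (n < N)%nat -> rsum (fun k => Cmod (g n k)) K <= B.
Proof.
  intros H. induction N.
  - exists 0. split. lra. intros; lia.
  - destruct IHN as [B [HB0 HB]]. destruct (H N) as [B' HB']. exists (Rmax B B'). split.
    eapply Rle_trans; [|apply Rmax_l]; auto.
    intros n K Hn. destruct (Nat.eq_dec n N). subst. eapply Rle_trans. apply HB'. apply Rmax_r.
    eapply Rle_trans. apply HB; lia. apply Rmax_l.
Qed.

Lemma csum_bound (g y : nat -> C) K B eta : (forall K, rsum (fun k => Cmod (g k)) K <= B) -> 0 <= eta ->
  (forall k, Cmod (y k) <= eta) -> Cmod (csum (fun k => Cmult (g k) (y k)) K) <= B * eta.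
Proof.
  intros HB He Hy. eapply Rle_trans. apply csum_Cmod. eapply Rle_trans.
  apply (rsum_le _ (fun k => eta * Cmod (g k))). intros k _. rewrite Cmod_mult, Rmult_comm.
  apply Rmult_le_compat_r. apply Cmod_ge_0. auto.
  rewrite rsum_scal, Rmult_comm. apply Rmult_le_compat_r; auto.
Qed.


Definition coef r s t lam a n m k : C :=
  if Nat.ltb k m then ghat_m r s t lam a n k m else if Nat.eqb k m then bc r lam a n m else RtoC 0.

Lemma csum_coef r s t lam a n m (f : nat -> C) :
  csum (fun k => Cmult (coef r s t lam a n m k) (f k)) (S m) =
  Cplus (csum (fun k => Cmult (ghat_m r s t lam a n k m) (f k)) m) (Cmult (bc r lam a n m) (f m)).
Proof.
  simpl. unfold coef at 2. rewrite Nat.ltb_irrefl, Nat.eqb_refl. f_equal.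
  apply csum_ext_lt. intros k Hk. unfold coef. destruct (Nat.ltb_spec k m); [auto|lia].
Qed.

Lemma rsum_coef r s t lam a n m :
  rsum (fun k => Cmod (coef r s t lam a n m k)) (S m) =
  rsum (fun k => Cmod (ghat_m r s t lam a n k m)) m + Cmod (bc r lam a n m).
Proof.
  simpl. unfold coef at 2. rewrite Nat.ltb_irrefl, Nat.eqb_refl. f_equal.
  apply rsum_ext_lt. intros k Hk. unfold coef. destruct (Nat.ltb_spec k m); [auto|lia].
Qed.

Lemma partial_eq r s t lam a n x m : r <> 0 -> lam_ok lam ->
  csum (Arow a x n) (S m) = csum (fun k => Cmult (coef r s t lam a n m k) (What r s t lam x k)) (S m).
Proof.
  intros Hr Hl. rewrite csum_coef. apply (main_identity r s t lam a n x _ (Bx r s t x)); auto.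
  apply Rel_What; auto. intros j. symmetry. apply Dz_Bx; auto.
Qed.

Lemma What_xofy_fun r s t lam y : r <> 0 -> lam_ok lam -> What r s t lam (xofy r s t lam y) = y.
Proof. intros. apply functional_extensionality. intros. apply What_xofy; auto. Qed.

Definition ek (k : nat) (i : nat) : C := if Nat.eqb i k then RtoC 1 else RtoC 0.

Lemma Dz_ek r s t k j : Dz r s t (ek k) j = if Nat.leb k j then RtoC (dseq r s t (j - k)) else RtoC 0.
Proof.
  unfold Dz. destruct (Nat.leb_spec k j).
  - rewrite (csum_ext_lt _ (fun i => if Nat.eqb i k then RtoC (dseq r s t (j - i)) else RtoC 0)).
    apply csum_delta. lia. intros i _. unfold ek. destruct (Nat.eqb i k); ring.
  - rewrite (csum_ext_lt _ (fun _ => RtoC 0)). apply csum_zero. intros i Hi. unfold ek.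
    destruct (Nat.eqb_spec i k). lia. ring.
Qed.

Lemma lam_inf lam : lam_ok lam -> forall M, exists N, forall n, (N <= n)%nat -> M < lam n.
Proof.
  intros [_ [_ H]] M. apply is_lim_seq_spec in H. destruct (H M) as [N HN]. exists N. auto.
Qed.

Lemma c0lam_ek r s t lam k : r <> 0 -> lam_ok lam -> c0_lam_B r s t lam (Dz r s t (ek k)).
Proof.
  intros Hr Hl. change (c0 (What r s t lam (Dz r s t (ek k)))). apply c0_intro. intros e He.
  pose proof (Delta_pos lam Hl k) as Hd.
  destruct (lam_inf lam Hl (Delta lam k / e)) as [N HN]. exists N. intros n Hn. specialize (HN n Hn).
  assert (Hlp : 0 < lam n) by (destruct Hl as [H _]; apply H).
  rewrite What_eq. rewrite (csum_ext_lt _ (fun i => if Nat.eqb i k then RtoC (Delta lam i) else RtoC 0)).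
  2:{ intros i _. rewrite B_Dz by auto. unfold ek. destruct (Nat.eqb i k); ring. }
  rewrite Cmod_mult, Cmod_R, Rabs_pos_eq by (left; apply Rinv_0_lt_compat; auto).
  assert (Cmod (csum (fun i => if Nat.eqb i k then RtoC (Delta lam i) else RtoC 0) (S n)) <= Delta lam k).
  { destruct (Nat.ltb_spec k (S n)).
    - rewrite csum_delta by auto. rewrite Cmod_R, Rabs_pos_eq; lra.
    - rewrite (csum_ext_lt _ (fun _ => RtoC 0)). rewrite csum_zero, Cmod_0. lra.
      intros i Hi. destruct (Nat.eqb_spec i k). lia. auto. }
  apply Rle_trans with (/ lam n * Delta lam k). apply Rmult_le_compat_l. left; apply Rinv_0_lt_compat; auto. auto.
  apply Rmult_le_reg_l with (lam n). auto. rewrite <- Rmult_assoc, Rinv_r by lra.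
  apply Rmult_lt_compat_r with (r := e) in HN; auto. replace (Delta lam k / e * e) with (Delta lam k) in HN by (field; lra). lra.
Qed.

Lemma nec_b r s t lam a : r <> 0 -> lam_ok lam ->
  (forall x, c0_lam_B r s t lam x -> forall n, ex_series (Arow a x n)) -> cond_b r s t a.
Proof.
  intros Hr Hl HA k n. specialize (HA _ (c0lam_ek r s t lam k Hr Hl) n).
  apply ex_series_Clim in HA. apply ex_series_C. exists (CSeries (Arow a (Dz r s t (ek k)) n)).
  eapply Clim_ext. 2: apply (Clim_comp_idx (csum (Arow a (Dz r s t (ek k)) n)) _ (fun N => (k + N)%nat)); [|exact HA].
  2:{ intros N. exists N. intros; lia. }
  intros N. cbv beta. rewrite csum_split.
  rewrite (csum_ext_lt (Arow a (Dz r s t (ek k)) n) (fun _ => RtoC 0) k).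
  2:{ intros j Hj. unfold Arow. rewrite Dz_ek. destruct (Nat.leb_spec k j). lia. ring. }
  rewrite csum_zero, Cplus_0_l. apply csum_ext_lt. intros i _. unfold Arow, daterm. rewrite Dz_ek.
  unfold dmat. destruct (Nat.leb_spec k (k + i)); [|lia]. replace (k + i - k)%nat with i by lia. ring.
Qed.

Lemma nec_cd r s t lam a : r <> 0 -> lam_ok lam ->
  (forall x, c0_lam_B r s t lam x -> forall n, ex_series (Arow a x n)) ->
  forall n, exists M, forall m, rsum (fun k => Cmod (coef r s t lam a n m k)) (S m) <= M.
Proof.
  intros Hr Hl HA n.
  set (q := fun (m : nat) (y : nat -> C) => Cmod (csum (fun k => Cmult (coef r s t lam a n m k) (y k)) (S m))).
  destruct (ubp nat q 1) as [delta [M [Hd HM]]].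
  - lra.
  - intros m y z _ _. unfold q. rewrite (csum_ext_lt _ (fun k => Cplus (Cmult (coef r s t lam a n m k) (y k)) (Cmult (coef r s t lam a n m k) (z k)))).
    rewrite csum_plus. rewrite Rmult_1_l. apply Cmod_triangle. intros; ring.
  - intros m y _. unfold q. rewrite (csum_ext_lt _ (fun k => Copp (Cmult (coef r s t lam a n m k) (y k)))).
    rewrite csum_opp, Cmod_opp. auto. intros; ring.
  - intros m. set (Sm := rsum (fun k => Cmod (coef r s t lam a n m k)) (S m)).
    assert (0 <= Sm) by (apply rsum_nonneg; intros; apply Cmod_ge_0).
    exists (/ (Sm + 1)). split. apply Rinv_0_lt_compat. lra. intros y _ Hy. unfold q.
    eapply Rle_trans. apply csum_Cmod. eapply Rle_trans. apply (rsum_le _ (fun k => / (Sm + 1) * Cmod (coef r s t lam a n m k))).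
    intros k _. rewrite Cmod_mult, Rmult_comm. apply Rmult_le_compat_r. apply Cmod_ge_0. auto.
    rewrite rsum_scal. fold Sm. apply Rmult_le_reg_l with (Sm + 1). lra. rewrite <- Rmult_assoc, Rinv_r by lra. lra.
  - intros y Hy. set (x := xofy r s t lam y).
    assert (Hx : c0_lam_B r s t lam x). { change (c0 (What r s t lam x)). unfold x. rewrite What_xofy_fun; auto. }
    destruct (Clim_bounded _ _ (ex_series_Clim _ (HA x Hx n))) as [M HM]. exists M. intros m. unfold q.
    specialize (HM (S m)). rewrite (partial_eq r s t lam a n x m Hr Hl) in HM. unfold x in HM. rewrite What_xofy_fun in HM; auto.
  - exists (M / delta). intros m.
    set (y := fun k => if Nat.ltb k (S m) then Cmult (RtoC delta) (sgn (coef r s t lam a n m k)) else RtoC 0).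
    assert (Hy : c0 y). { apply (c0_finite y (S m)). intros k Hk. unfold y. destruct (Nat.ltb_spec k (S m)). lia. auto. }
    specialize (HM m y Hy). unfold q in HM.
    assert (Hb : forall k, Cmod (y k) <= delta).
    { intros k. unfold y. destruct (Nat.ltb k (S m)). rewrite Cmod_mult, Cmod_R, Rabs_pos_eq by lra.
      pose proof (sgn_bound (coef r s t lam a n m k)). pose proof (Cmod_ge_0 (sgn (coef r s t lam a n m k))). nra.
      rewrite Cmod_0. lra. }
    specialize (HM Hb).
    rewrite (csum_ext_lt _ (fun k => Cmult (RtoC delta) (RtoC (Cmod (coef r s t lam a n m k))))) in HM.
    2:{ intros k Hk. unfold y. destruct (Nat.ltb_spec k (S m)); [|lia]. rewrite <- sgn_mul. ring. }
    rewrite csum_scal, csum_RtoC, <- RtoC_mult, Cmod_R, Rabs_pos_eq in HM.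
    2:{ apply Rmult_le_pos. lra. apply rsum_nonneg. intros; apply Cmod_ge_0. }
    apply Rmult_le_reg_l with delta. auto. replace (delta * (M / delta)) with M by (field; lra). auto.
Qed.

Lemma nec_bcd r s t lam a : r <> 0 -> lam_ok lam ->
  (forall x, c0_lam_B r s t lam x -> forall n, ex_series (Arow a x n)) ->
  cond_b r s t a /\ cond_c r s t lam a /\ cond_d r lam a.
Proof.
  intros Hr Hl HA. split. apply (nec_b r s t lam); auto.
  split; intros n; destruct (nec_cd r s t lam a Hr Hl HA n) as [M HM]; exists M; intros m; specialize (HM m);
    rewrite rsum_coef in HM; pose proof (Cmod_ge_0 (bc r lam a n m)).
  - lra.
  - pose proof (rsum_nonneg (fun k => Cmod (ghat_m r s t lam a n k m)) m ltac:(intros; apply Cmod_ge_0)).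
    unfold bc in *. lra.
Qed.


Lemma suff_bcd r s t lam a : r <> 0 -> lam_ok lam -> cond_b r s t a -> cond_c r s t lam a -> cond_d r lam a ->
  forall n, (exists B, forall K, rsum (fun k => Cmod (ghat r s t lam a n k)) K <= B) /\
   forall x, c0_lam_B r s t lam x -> ex_series (Arow a x n) /\
     Ax a x n = CSeries (fun k => Cmult (ghat r s t lam a n k) (What r s t lam x k)).
Proof.
  intros Hr Hl Hb Hc Hd n.
  destruct (Hc n) as [Mc HMc]. destruct (Hd n) as [Md HMd].
  assert (HM : forall m, rsum (fun k => Cmod (coef r s t lam a n m k)) (S m) <= Mc + Md).
  { intros m. rewrite rsum_coef. specialize (HMc m). specialize (HMd m). unfold bc. lra. }
  assert (Hds : forall j, Clim (fun m => dasum r s t a n j m) (CSeries (daterm r s t a n j))).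
  { intros j. apply (Clim_comp_idx (csum (daterm r s t a n j)) _ (fun m => S (m - j))).
    intros N. exists (N + j)%nat. intros; lia. apply ex_series_Clim. apply Hb. }
  assert (Hcl : forall k, Clim (fun m => coef r s t lam a n m k) (ghat r s t lam a n k)).
  { intros k. apply (Clim_ext_ev (fun m => ghat_m r s t lam a n k m)).
    exists (S k). intros m Hm. unfold coef. destruct (Nat.ltb_spec k m); [auto|lia].
    unfold ghat, ghat_m. apply Clim_scal. apply Clim_minus; apply Clim_scal; apply Hds. }
  split.
  - exists (Mc + Md). intros K. apply (toeplitz (coef r s t lam a n) _ _ (fun _ => RtoC 0) HM Hcl c0_zero).
  - intros x Hx. change (c0 (What r s t lam x)) in Hx.
    destruct (toeplitz (coef r s t lam a n) _ _ _ HM Hcl Hx) as [_ [_ HT]].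
    set (L := CSeries (fun k => Cmult (ghat r s t lam a n k) (What r s t lam x k))) in *.
    assert (HC : Clim (csum (Arow a x n)) L).
    { apply (Clim_ext_ev (fun N => csum (Arow a x n) (S (N - 1)))).
      exists 1%nat. intros N HN. f_equal. lia.
      apply (Clim_comp_idx (fun m => csum (Arow a x n) (S m)) L (fun N => (N - 1)%nat)).
      intros N. exists (S N). intros; lia.
      eapply Clim_ext; [|exact HT]. intros m. symmetry. apply partial_eq; auto. }
    split. apply ex_series_C. eauto. unfold Ax. apply CSeries_Clim. auto.
Qed.

Definition G r s t lam a n (y : nat -> C) : C := CSeries (fun k => Cmult (ghat r s t lam a n k) (y k)).

Lemma G_lim r s t lam a n y B : (forall K, rsum (fun k => Cmod (ghat r s t lam a n k)) K <= B) -> c0 y ->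
  Clim (csum (fun k => Cmult (ghat r s t lam a n k) (y k))) (G r s t lam a n y).
Proof. intros. apply (row_lim _ _ B); auto. Qed.

Lemma G_plus r s t lam a n y z B : (forall K, rsum (fun k => Cmod (ghat r s t lam a n k)) K <= B) -> c0 y -> c0 z ->
  G r s t lam a n (fun k => Cplus (y k) (z k)) = Cplus (G r s t lam a n y) (G r s t lam a n z).
Proof.
  intros HB Hy Hz. apply (Clim_unique (csum (fun k => Cmult (ghat r s t lam a n k) (Cplus (y k) (z k))))).
  apply (G_lim _ _ _ _ _ _ _ B); auto. apply c0_plus; auto.
  eapply Clim_ext. 2: apply Clim_plus; apply (G_lim _ _ _ _ _ _ _ B); eauto.
  intros K. cbv beta. rewrite <- csum_plus. apply csum_ext_lt. intros; ring.
Qed.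

Lemma G_opp r s t lam a n y B : (forall K, rsum (fun k => Cmod (ghat r s t lam a n k)) K <= B) -> c0 y ->
  G r s t lam a n (fun k => Copp (y k)) = Copp (G r s t lam a n y).
Proof.
  intros HB Hy. apply (Clim_unique (csum (fun k => Cmult (ghat r s t lam a n k) (Copp (y k))))).
  apply (G_lim _ _ _ _ _ _ _ B); auto. apply c0_opp; auto.
  eapply Clim_ext. 2: apply Clim_opp; apply (G_lim _ _ _ _ _ _ _ B); eauto.
  intros K. cbv beta. rewrite <- csum_opp. apply csum_ext_lt. intros; ring.
Qed.

Lemma G_bound r s t lam a n y B eta : (forall K, rsum (fun k => Cmod (ghat r s t lam a n k)) K <= B) -> c0 y ->
  0 <= eta -> (forall k, Cmod (y k) <= eta) -> Cmod (G r s t lam a n y) <= B * eta.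
Proof.
  intros HB Hy He Hb. apply (Clim_bound _ _ _ (G_lim _ _ _ _ _ _ _ B HB Hy)). exists O. intros K _.
  apply csum_bound; auto.
Qed.

Lemma Ax_G r s t lam a y n : r <> 0 -> lam_ok lam -> cond_b r s t a -> cond_c r s t lam a -> cond_d r lam a ->
  c0 y -> Ax a (xofy r s t lam y) n = G r s t lam a n y.
Proof.
  intros Hr Hl Hb Hc Hd Hy. destruct (suff_bcd r s t lam a Hr Hl Hb Hc Hd n) as [_ H].
  assert (Hx : c0_lam_B r s t lam (xofy r s t lam y)).
  { change (c0 (What r s t lam (xofy r s t lam y))). rewrite What_xofy_fun; auto. }
  destruct (H _ Hx) as [_ E]. rewrite E. rewrite What_xofy_fun; auto.
Qed.

Lemma c0lam_xofy r s t lam y : r <> 0 -> lam_ok lam -> c0 y -> c0_lam_B r s t lam (xofy r s t lam y).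
Proof. intros. change (c0 (What r s t lam (xofy r s t lam y))). rewrite What_xofy_fun; auto. Qed.


Lemma rsum_const c N : rsum (fun _ => c) N = INR N * c.
Proof. induction N. simpl; ring. change (rsum (fun _ => c) (S N)) with (rsum (fun _ => c) N + c). rewrite IHN, S_INR. ring. Qed.

Lemma powp_2_ge1 p : 1 <= p -> 1 <= powp 2 p.
Proof.
  intros Hp. rewrite powp_pos by lra. rewrite <- (Rpower_O 2) at 1 by lra. apply Rle_Rpower; lra.
Qed.

Lemma powp_tri a b p : 0 <= p -> powp (Cmod (Cplus a b)) p <= powp 2 p * (powp (Cmod a) p + powp (Cmod b) p).
Proof.
  intros Hp. eapply Rle_trans. apply (powp_mono _ (2 * Rmax (Cmod a) (Cmod b))). auto.
  split. apply Cmod_ge_0. eapply Rle_trans. apply Cmod_triangle.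
  pose proof (Rmax_l (Cmod a) (Cmod b)). pose proof (Rmax_r (Cmod a) (Cmod b)). lra.
  rewrite powp_mult. apply Rmult_le_compat_l. apply powp_nonneg. apply powp_max. lra.
  eapply Rle_trans. apply Cmod_ge_0. apply Rmax_l.
Qed.

Lemma powp_pos' x p : 0 < x -> 0 < powp x p.
Proof. intros H. rewrite powp_pos by auto. unfold Rpower. apply exp_pos. Qed.

Lemma nec_a r s t lam a p : r <> 0 -> lam_ok lam -> 1 < p ->
  cond_b r s t a -> cond_c r s t lam a -> cond_d r lam a ->
  (forall x, c0_lam_B r s t lam x -> in_lp p (Ax a x)) -> cond_a r s t lam a p.
Proof.
  intros Hr Hl Hp Hb Hc Hd HA.
  pose proof (suff_bcd r s t lam a Hr Hl Hb Hc Hd) as SU.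
  assert (Hrow : forall n, exists B, forall K, rsum (fun k => Cmod (ghat r s t lam a n k)) K <= B) by (intros n; apply SU).
  assert (Hrowf : forall n, {B | forall K, rsum (fun k => Cmod (ghat r s t lam a n k)) K <= B}).
  { intros n. apply constructive_indefinite_description. auto. }
  set (Bf := fun n => proj1_sig (Hrowf n)).
  assert (HBf : forall n K, rsum (fun k => Cmod (ghat r s t lam a n k)) K <= Bf n) by (intros; apply (proj2_sig (Hrowf n))).
  set (q := fun (N : nat) (y : nat -> C) => rsum (fun n => powp (Cmod (G r s t lam a n y)) p) N).
  destruct (ubp nat q (powp 2 p)) as [delta [M [Hdl HM]]].
  - apply powp_2_ge1. lra.
  - intros N y z Hy Hz. unfold q. rewrite <- rsum_plus, <- rsum_scal. apply rsum_le. intros n _.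
    rewrite (G_plus _ _ _ _ _ _ _ _ (Bf n)); auto. apply powp_tri. lra.
  - intros N y Hy. unfold q. apply rsum_ext_lt. intros n _. rewrite (G_opp _ _ _ _ _ _ _ (Bf n)); auto. rewrite Cmod_opp. auto.
  - intros N. destruct (finite_rows (ghat r s t lam a) N Hrow) as [B [HB0 HB]].
    set (Sb := INR N * powp B p). assert (0 <= Sb) by (unfold Sb; apply Rmult_le_pos; [apply pos_INR|apply powp_nonneg]).
    exists (Rmin 1 (/ (Sb + 1))). split. apply Rmin_pos. lra. apply Rinv_0_lt_compat. lra.
    intros y Hy Hyb. set (eta := Rmin 1 (/ (Sb + 1))) in *.
    assert (He0 : 0 < eta) by (apply Rmin_pos; [lra | apply Rinv_0_lt_compat; lra]).
    unfold q. eapply Rle_trans. apply (rsum_le _ (fun _ => powp B p * eta)).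
    { intros n Hn. eapply Rle_trans. apply (powp_mono _ (B * eta)). lra. split. apply Cmod_ge_0.
      apply (G_bound _ _ _ _ _ _ _ B); [intros K; apply HB; auto | auto | lra | auto].
      rewrite powp_mult by lra. apply Rmult_le_compat_l. apply powp_nonneg. apply powp_le_self. lra.
      split. lra. apply Rmin_l. }
    rewrite rsum_const. rewrite <- Rmult_assoc. fold Sb.
    apply Rle_trans with (Sb * / (Sb + 1)). apply Rmult_le_compat_l. auto. apply Rmin_r.
    apply Rmult_le_reg_r with (Sb + 1). lra. rewrite Rmult_assoc, Rinv_l by lra. lra.
  - intros y Hy. pose proof (HA _ (c0lam_xofy r s t lam y Hr Hl Hy)) as Hlp. unfold in_lp in Hlp.
    exists (Series (fun n => powp (Cmod (Ax a (xofy r s t lam y) n)) p)). intros N. unfold q.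
    rewrite (rsum_ext_lt _ (fun n => powp (Cmod (Ax a (xofy r s t lam y) n)) p)).
    apply rsum_le_series; auto. intros; apply powp_nonneg.
    intros n _. rewrite Ax_G; auto.
  - exists (M / powp delta p). intros F HF N.
    set (y := fun k => Cmult (RtoC delta) (ind F k)).
    destruct (list_bound F) as [K0 HK0].
    assert (Hz : forall k, (K0 <= k)%nat -> y k = RtoC 0).
    { intros k Hk. unfold y, ind. destruct (in_dec Nat.eq_dec k F) as [Hi|Hi]. specialize (HK0 k Hi). lia. ring. }
    assert (Hy : c0 y) by (apply (c0_finite y K0); auto).
    assert (Hyb : forall k, Cmod (y k) <= delta).
    { intros k. unfold y, ind. destruct (in_dec Nat.eq_dec k F); rewrite Cmod_mult, Cmod_R, Rabs_pos_eq by lra.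
      rewrite Cmod_R, Rabs_R1. lra. rewrite Cmod_0. lra. }
    specialize (HM N y Hy Hyb). unfold q in HM.
    rewrite (rsum_ext_lt _ (fun n => powp delta p * powp (Cmod (csum_list (ghat r s t lam a n) F)) p)) in HM.
    2:{ intros n _. unfold G. rewrite (CSeries_finite _ K0).
        2:{ intros k Hk. rewrite Hz by auto. ring. }
        rewrite (csum_ext_lt _ (fun k => Cmult (RtoC delta) (Cmult (ghat r s t lam a n k) (ind F k)))).
        2:{ intros; unfold y; ring. }
        rewrite csum_scal, csum_ind; auto. rewrite Cmod_mult, Cmod_R, Rabs_pos_eq by lra.
        apply powp_mult. lra. apply Cmod_ge_0. }
    rewrite rsum_scal in HM. pose proof (powp_pos' delta p Hdl).
    apply Rmult_le_reg_l with (powp delta p). auto. replace (powp delta p * (M / powp delta p)) with M by (field; lra). auto.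
Qed.

Lemma nec_e r s t lam a : r <> 0 -> lam_ok lam ->
  cond_b r s t a -> cond_c r s t lam a -> cond_d r lam a ->
  (forall x, c0_lam_B r s t lam x -> in_linf (Ax a x)) -> cond_e r s t lam a.
Proof.
  intros Hr Hl Hb Hc Hd HA.
  pose proof (suff_bcd r s t lam a Hr Hl Hb Hc Hd) as SU.
  assert (Hrow : forall n, exists B, forall K, rsum (fun k => Cmod (ghat r s t lam a n k)) K <= B) by (intros n; apply SU).
  assert (Hrowf : forall n, {B | forall K, rsum (fun k => Cmod (ghat r s t lam a n k)) K <= B}).
  { intros n. apply constructive_indefinite_description. auto. }
  set (Bf := fun n => proj1_sig (Hrowf n)).
  assert (HBf : forall n K, rsum (fun k => Cmod (ghat r s t lam a n k)) K <= Bf n) by (intros; apply (proj2_sig (Hrowf n))).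
  assert (HB0 : forall n, 0 <= Bf n). { intros n. apply (HBf n 0%nat). }
  set (q := fun (n : nat) (y : nat -> C) => Cmod (G r s t lam a n y)).
  destruct (ubp nat q 1) as [delta [M [Hdl HM]]].
  - lra.
  - intros n y z Hy Hz. unfold q. rewrite (G_plus _ _ _ _ _ _ _ _ (Bf n)); auto. rewrite Rmult_1_l. apply Cmod_triangle.
  - intros n y Hy. unfold q. rewrite (G_opp _ _ _ _ _ _ _ (Bf n)); auto. apply Cmod_opp.
  - intros n. exists (/ (Bf n + 1)). split. apply Rinv_0_lt_compat. pose proof (HB0 n). lra.
    intros y Hy Hyb. unfold q. pose proof (HB0 n). eapply Rle_trans. apply (G_bound _ _ _ _ _ _ _ (Bf n) (/ (Bf n + 1)));
    [apply HBf | exact Hy | left; apply Rinv_0_lt_compat; lra | exact Hyb]. apply Rle_trans with ((Bf n + 1) * / (Bf n + 1)).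
    apply Rmult_le_compat_r. left. apply Rinv_0_lt_compat. lra. lra. rewrite Rinv_r by lra. lra.
  - intros y Hy. destruct (HA _ (c0lam_xofy r s t lam y Hr Hl Hy)) as [M HM]. exists M. intros n. unfold q.
    rewrite <- Ax_G; auto.
  - exists (M / delta). intros n N.
    set (y := fun k => if Nat.ltb k N then Cmult (RtoC delta) (sgn (ghat r s t lam a n k)) else RtoC 0).
    assert (Hz : forall k, (N <= k)%nat -> y k = RtoC 0).
    { intros k Hk. unfold y. destruct (Nat.ltb_spec k N). lia. auto. }
    assert (Hy : c0 y) by (apply (c0_finite y N); auto).
    assert (Hyb : forall k, Cmod (y k) <= delta).
    { intros k. unfold y. destruct (Nat.ltb k N). rewrite Cmod_mult, Cmod_R, Rabs_pos_eq by lra.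
      pose proof (sgn_bound (ghat r s t lam a n k)). pose proof (Cmod_ge_0 (sgn (ghat r s t lam a n k))). nra.
      rewrite Cmod_0. lra. }
    specialize (HM n y Hy Hyb). unfold q, G in HM. rewrite (CSeries_finite _ N) in HM.
    2:{ intros k Hk. rewrite Hz by auto. ring. }
    rewrite (csum_ext_lt _ (fun k => Cmult (RtoC delta) (RtoC (Cmod (ghat r s t lam a n k))))) in HM.
    2:{ intros k Hk. unfold y. destruct (Nat.ltb_spec k N); [|lia]. rewrite <- sgn_mul. ring. }
    rewrite csum_scal, csum_RtoC, <- RtoC_mult, Cmod_R, Rabs_pos_eq in HM.
    2:{ apply Rmult_le_pos. lra. apply rsum_nonneg. intros; apply Cmod_ge_0. }
    apply Rmult_le_reg_l with delta. auto. replace (delta * (M / delta)) with M by (field; lra). auto.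
Qed.

Theorem theorem13 (r s t : R) (lam : nat -> R) (a : nat -> nat -> C) (p : R) :
  r <> 0 -> s <> 0 -> t <> 0 -> lam_ok lam -> 1 < p ->
  (maps_c0lamB_to r s t lam a (in_lp p) <->
     cond_a r s t lam a p /\ cond_b r s t a /\ cond_c r s t lam a /\ cond_d r lam a) /\
  (maps_c0lamB_to r s t lam a in_linf <->
     cond_c r s t lam a /\ cond_d r lam a /\ (cond_b r s t a /\ cond_e r s t lam a)).
Proof.
  intros Hr Hs Ht Hl Hp. split; split.
  - intros HA. destruct (nec_bcd r s t lam a Hr Hl) as [Hb [Hc Hd]].
    { intros x Hx. apply HA. auto. }
    repeat split; auto. apply nec_a; auto. intros x Hx. apply HA; auto.
  - intros [[M Ha] [Hb [Hc Hd]]] x Hx. pose proof (suff_bcd r s t lam a Hr Hl Hb Hc Hd) as SU.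
    split. intros n. apply SU; auto.
    unfold in_lp. eapply ex_series_ext.
    2:{ apply (lp_suff (ghat r s t lam a) p M). lra. exact Ha. intros n; apply SU. exact Hx. }
    intros n. cbv beta. f_equal. f_equal. symmetry. apply SU; auto.
  - intros HA. destruct (nec_bcd r s t lam a Hr Hl) as [Hb [Hc Hd]].
    { intros x Hx. apply HA. auto. }
    repeat split; auto. apply nec_e; auto. intros x Hx. apply HA; auto.
  - intros [Hc [Hd [Hb [Me HMe]]]] x Hx. pose proof (suff_bcd r s t lam a Hr Hl Hb Hc Hd) as SU.
    split. intros n. apply SU; auto.
    change (c0 (What r s t lam x)) in Hx. destruct (c0_bounded _ Hx) as [Y [HY0 HY]].
    exists (Me * Y). intros n. destruct (SU n) as [_ H]. rewrite (proj2 (H x Hx)).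
    apply (G_bound r s t lam a n _ Me); auto.
Qed.
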